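(* Let $1<p<\infty$, let $a,b$ be as in the context, and let $w=(w_n)_{n\ge0}$ be a sequence of nonzero complex numbers such that $F_w$ is a bounded operator on $\ell^p_{a,b}$. Then: (i) If for every $\nu\ge0$ $$\liminf_{n\to\infty}\frac{|a_{\nu+n}|+|b_{\nu+n-1}|}{\prod_{k=0}^{n-1}|w_{\nu+k}|}=0,$$ then $F_w^*$ is hypercyclic on $(\ell^p_{a,b})^*$. (ii) If $F_w^*$ is hypercyclic on $(\ell^p_{a,b})^*$ and the constant function $1$ belongs to $\ell^p_{a,b}$, then $$\sup_{n\ge0}\frac{\prod_{k=0}^{n-1}|w_k|}{|a_n|}\Big(1+\sum_{j=1}^{\infty}\Big|\prod_{k=0}^{j-1}\frac{b_{n+k}}{a_{n+k+1}}\Big|^p\Big)^{1/p}=\infty.$$ (iii) $F_w^*$ is supercyclic on $(\ell^p_{a,b})^*$. (iv) If $\sup_{n\ge0}|w_na_n/a_{n+1}|<\infty$ and $\limsup_{n\to\infty}|b_n/a_{n+1}|<1$, then $F_w^*$ is hypercyclic on $(\ell^p_{a,b})^*$ if and only if $$\liminf_{n\to\infty}\Big|\frac{a_{\nu+n}}{\prod_{k=0}^{n-1}w_{\nu+k}}\Big|=0\quad\text{for all }\nu\ge0.$$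
   Context: Let $a=(a_n)_{n\ge0}$, $b=(b_n)_{n\ge0}$ be sequences of nonzero complex numbers with $\limsup_{n\to\infty}(|a_n|+|b_n|)^{1/n}<\infty$, and let $R=1/\limsup_{n}(|a_n|+|b_n|)^{1/n}\in(0,\infty]$. For $n\ge0$ let $f_n(z)=(a_n+b_nz)z^n$. For $1\le p<\infty$, $\ell^p_{a,b}$ is the space of analytic functions on $\{|z|<R\}$ of the form $f=\sum_{n\ge0}\lambda_nf_n$ with $(\lambda_n)\in\ell^p(\mathbb{N}_0)$ (the series converges locally uniformly on $\{|z|<R\}$ and the $\lambda_n$ are uniquely determined by $f$), normed by $\|f\|=(\sum_n|\lambda_n|^p)^{1/p}$; thus $\{f_n\}$ is a normalized Schauder basis equivalent to the standard basis of $\ell^p(\mathbb{N}_0)$. For a sequence $w=(w_n)_{n\ge0}$, the weighted forward shift is $F_w\big(\sum_{n\ge0}\mu_nz^n\big)=\sum_{n\ge0}\mu_nw_nz^{n+1}$ (acting on power series); ''bounded on $X$'' means $F_w$ maps $X$ into $X$ and is a bounded operator; $F_w^*$ is its Banach space adjoint. An operator $T$ on a separable Banach space $Y$ is hypercyclic if some orbit $\{T^nx:n\ge0\}$ is dense in $Y$, and supercyclic if for some $x$ the set $\{cT^nx:c\in\mathbb{C},n\ge0\}$ is dense in $Y$. Empty products equal $1$. *)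

(* Defs.v *)
From Stdlib Require Import Reals.
From Coquelicot Require Import Coquelicot.
Open Scope R_scope.

(* |x|^y for x >= 0, with the convention 0^y = 0 (y > 0). *)
Definition rpowp (x y : R) : R :=
  if Req_EM_T x 0 then 0 else Rpower x y.

Fixpoint prodR (f : nat -> R) (n : nat) : R :=
  match n with O => 1 | S m => prodR f m * f m end.
Fixpoint prodC (f : nat -> C) (n : nat) : C :=
  match n with O => RtoC 1 | S m => Cmult (prodC f m) (f m) end.

Definition in_lp (p : R) (lam : nat -> C) : Prop :=
  ex_series (fun n => rpowp (Cmod (lam n)) p).
Definition lpnorm (p : R) (lam : nat -> C) : R :=
  rpowp (Series (fun n => rpowp (Cmod (lam n)) p)) (/ p).

(* Elements of l^p_{a,b} are represented by their Taylor coefficient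
   sequences mu (f = sum_n mu_n z^n).  The Taylor coefficients of
   sum_n lam_n (a_n + b_n z) z^n are: *)
Definition taylor (a b lam : nat -> C) (m : nat) : C :=
  match m with
  | O => Cmult (a O) (lam O)
  | S k => Cplus (Cmult (a (S k)) (lam (S k))) (Cmult (b k) (lam k))
  end.

(* The (unique, since a_n <> 0) coefficient sequence lam with taylor lam = mu *)
Fixpoint coefinv (a b mu : nat -> C) (m : nat) : C :=
  match m with
  | O => Cdiv (mu O) (a O)
  | S k => Cdiv (Cminus (mu (S k)) (Cmult (b k) (coefinv a b mu k))) (a (S k))
  end.

Definition inX (p : R) (a b : nat -> C) (mu : nat -> C) : Prop :=
  exists lam, in_lp p lam /\ forall m, mu m = taylor a b lam m.

Definition normX (p : R) (a b : nat -> C) (mu : nat -> C) : R :=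
  lpnorm p (coefinv a b mu).

Definition Fw (w : nat -> C) (mu : nat -> C) (n : nat) : C :=
  match n with O => RtoC 0 | S k => Cmult (w k) (mu k) end.

Definition Fw_bounded (p : R) (a b w : nat -> C) : Prop :=
  (forall mu, inX p a b mu -> inX p a b (Fw w mu)) /\
  exists C0 : R, forall mu, inX p a b mu -> normX p a b (Fw w mu) <= C0 * normX p a b mu.

(* elements of the dual space: bounded linear functionals on l^p_{a,b}
   (functionals are only considered on inX) *)
Definition in_dual (p : R) (a b : nat -> C) (phi : (nat -> C) -> C) : Prop :=
  (forall x y, inX p a b x -> inX p a b y ->
     phi (fun n => Cplus (x n) (y n)) = Cplus (phi x) (phi y)) /\
  (forall (c : C) x, inX p a b x -> phi (fun n => Cmult c (x n)) = Cmult c (phi x)) /\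
  exists C0 : R, forall x, inX p a b x -> Cmod (phi x) <= C0 * normX p a b x.

Definition dual_close (p : R) (a b : nat -> C) (chi psi : (nat -> C) -> C) (eps : R) : Prop :=
  exists delta, delta < eps /\
    forall x, inX p a b x -> Cmod (Cminus (chi x) (psi x)) <= delta * normX p a b x.

Definition Fw_adj (w : nat -> C) (phi : (nat -> C) -> C) : (nat -> C) -> C :=
  fun x => phi (Fw w x).

Definition adj_hypercyclic (p : R) (a b w : nat -> C) : Prop :=
  exists phi, in_dual p a b phi /\
    forall psi, in_dual p a b psi -> forall eps, 0 < eps ->
      exists n : nat, dual_close p a b (Nat.iter n (Fw_adj w) phi) psi eps.

Definition adj_supercyclic (p : R) (a b w : nat -> C) : Prop :=
  exists phi, in_dual p a b phi /\
    forall psi, in_dual p a b psi -> forall eps, 0 < eps ->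
      exists (c : C) (n : nat),
        dual_close p a b (fun x => Cmult c (Nat.iter n (Fw_adj w) phi x)) psi eps.

Definition const_one : nat -> C := fun n => match n with O => RtoC 1 | _ => RtoC 0 end.

(* Main.v *)
Require Import Defs.
From Stdlib Require Import Reals.
From Coquelicot Require Import Coquelicot.
From Stdlib Require Import Lra Lia ZArith FunctionalExtensionality Classical IndefiniteDescription Cantor.
Open Scope R_scope.

Lemma rpowp_0 y : rpowp 0 y = 0.
Proof. unfold rpowp; destruct (Req_EM_T 0 0); lra. Qed.
Lemma rpowp_pos x y : 0 < x -> rpowp x y = Rpower x y.
Proof. intros; unfold rpowp; destruct (Req_EM_T x 0); [lra|auto]. Qed.
Lemma rpowp_ge0 x y : 0 <= rpowp x y.
Proof. unfold rpowp; destruct (Req_EM_T x 0); [lra|]. unfold Rpower; left; apply exp_pos. Qed.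
Lemma rpowp_gt0 x y : 0 < x -> 0 < rpowp x y.
Proof. intros; rewrite rpowp_pos; auto. unfold Rpower; apply exp_pos. Qed.
Lemma rpowp_1 y : rpowp 1 y = 1.
Proof. rewrite rpowp_pos by lra. unfold Rpower; rewrite ln_1, Rmult_0_r, exp_0; auto. Qed.
Lemma rpowp_mult x y z : 0 <= x -> 0 <= y -> rpowp (x*y) z = rpowp x z * rpowp y z.
Proof.
  intros Hx Hy. destruct (Req_dec x 0) as [->|]. rewrite Rmult_0_l, !rpowp_0; ring.
  destruct (Req_dec y 0) as [->|]. rewrite Rmult_0_r, !rpowp_0; ring.
  rewrite !rpowp_pos; try nra. rewrite Rpower_mult_distr; auto; lra.
Qed.
Lemma rpowp_inv x q : 0 < q -> 0 <= x -> rpowp (rpowp x q) (/q) = x.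
Proof.
  intros Hq Hx. destruct (Req_dec x 0) as [->|]. rewrite !rpowp_0; auto.
  rewrite (rpowp_pos x) by lra. rewrite rpowp_pos.
  rewrite Rpower_mult, Rinv_r, Rpower_1; lra.
  unfold Rpower; apply exp_pos.
Qed.
Lemma rpowp_inv' x q : 0 < q -> 0 <= x -> rpowp (rpowp x (/q)) q = x.
Proof.
  intros Hq Hx. pattern q at 2; replace q with (/ / q) by (field; lra).
  apply rpowp_inv; auto. apply Rinv_0_lt_compat; auto.
Qed.
Lemma rpowp_le x y z : 0 <= z -> 0 <= x <= y -> rpowp x z <= rpowp y z.
Proof.
  intros Hz [Hx Hxy]. destruct (Req_dec x 0) as [->|]. rewrite rpowp_0; apply rpowp_ge0.
  rewrite !rpowp_pos by lra. apply Rle_Rpower_l; lra.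
Qed.
Lemma rpowp_lt x y z : 0 < z -> 0 <= x < y -> rpowp x z < rpowp y z.
Proof.
  intros Hz [Hx Hxy]. destruct (Req_dec x 0) as [->|]. rewrite rpowp_0; apply rpowp_gt0; lra.
  rewrite !rpowp_pos by lra. apply Rlt_Rpower_l; lra.
Qed.
Lemma rpowp_eq0 x z : 0 <= x -> rpowp x z = 0 -> x = 0.
Proof. intros H H0. destruct (Req_dec x 0); auto. pose proof (rpowp_gt0 x z). lra. Qed.

Lemma is_series_lim (f : nat -> R) (l : R) : is_lim_seq (sum_n f) l -> is_series f l.
Proof. intro H; exact H. Qed.
Lemma is_series_fin (f : nat -> R) M : (forall n, (M <= n)%nat -> f n = 0) -> is_series f (sum_n f M).
Proof.
  intros H. apply is_series_lim.
  apply is_lim_seq_ext_loc with (fun _ => sum_n f M); [|apply is_lim_seq_const].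
  exists M. intros n Hn. induction Hn. auto. rewrite sum_Sn, H by lia. rewrite IHHn. symmetry; apply Rplus_0_r.
Qed.
Lemma ex_series_fin (f : nat -> R) M : (forall n, (M <= n)%nat -> f n = 0) -> ex_series f.
Proof. intros H; eexists; apply (is_series_fin f M H). Qed.
Lemma Series_0' (f : nat -> R) : (forall n, f n = 0) -> Series f = 0.
Proof. intros H. rewrite (Series_ext _ (fun n => 0 * 1)). rewrite Series_scal_l. ring. intros; rewrite H; ring. Qed.
Lemma Series_ge0 f : (forall n, 0 <= f n) -> ex_series f -> 0 <= Series f.
Proof. intros H Hf. rewrite <- (Series_0' (fun _ => 0)) by auto. apply Series_le; auto. intros; split; [lra|auto]. Qed.
Lemma sum_f_R0_ge_term f m k : (forall n, 0 <= f n) -> (k <= m)%nat -> f k <= sum_f_R0 f m.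
Proof.
  intros H Hk. induction m. replace k with 0%nat by lia. simpl; lra.
  simpl. destruct (Nat.eq_dec k (S m)) as [->|]. pose proof (cond_pos_sum f m). assert (0 <= sum_f_R0 f m).
  { clear -H. induction m; simpl; auto. specialize (H (S m)); lra. } lra.
  specialize (IHm ltac:(lia)). specialize (H (S m)); lra.
Qed.
Lemma Series_ge_term f m : (forall n, 0 <= f n) -> ex_series f -> f m <= Series f.
Proof.
  intros H Hf. rewrite (Series_incr_n f (S m)) by (auto; lia). simpl pred.
  pose proof (sum_f_R0_ge_term f m m H (le_n _)).
  assert (0 <= Series (fun k => f (S m + k)%nat)). apply Series_ge0; auto. apply (ex_series_incr_n f (S m)); auto.
  lra.
Qed.
Lemma Series_single (r : R) m : Series (fun n => if Nat.eqb n m then r else 0) = r.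
Proof.
  apply is_series_unique. set (g := fun n => if Nat.eqb n m then r else 0).
  assert (E : sum_n g (S m) = r).
  { rewrite sum_Sn. unfold g at 2. destruct (Nat.eqb_spec (S m) m); [lia|].
  assert (forall k, (k <= m)%nat -> sum_n g k = if Nat.eqb k m then r else 0).
  { induction k; intros. rewrite sum_O; auto. rewrite sum_Sn, IHk by lia. unfold g.
    destruct (Nat.eqb_spec k m); [lia|]. destruct (Nat.eqb_spec (S k) m); simpl; unfold plus; simpl; ring. }
  rewrite H by lia. rewrite Nat.eqb_refl. unfold plus; simpl; ring. }
  rewrite <- E. apply is_series_fin. intros n Hn. unfold g. destruct (Nat.eqb_spec n m); [lia|auto].
Qed.

Definition iterF (w : nat -> C) (n : nat) (x : nat -> C) : nat -> C := Nat.iter n (Fw w) x.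
Definition Bnd (a b : nat -> C) (m : nat) : R := Cmod (a m) + Cmod (b (m - 1)%nat).

Lemma Bnd_ge0 a b m : 0 <= Bnd a b m.
Proof. unfold Bnd; pose proof (Cmod_ge_0 (a m)); pose proof (Cmod_ge_0 (b (m-1)%nat)); lra. Qed.

Lemma iterF_S w n x : iterF w (S n) x = Fw w (iterF w n x).
Proof. reflexivity. Qed.
Lemma iterF_add w m n x : iterF w (m + n) x = iterF w m (iterF w n x).
Proof. induction m; simpl; auto. rewrite <- IHm. reflexivity. Qed.
Lemma iterF_low w n x i : (i < n)%nat -> iterF w n x i = RtoC 0.
Proof.
  revert i; induction n; intros i Hi. lia. rewrite iterF_S. destruct i; simpl; auto.
  rewrite IHn by lia. apply Cmult_0_r.
Qed.
Lemma iterF_high w n x i : iterF w n x (i + n)%nat = Cmult (prodC (fun k => w (i + k)%nat) n) (x i).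
Proof.
  induction n. simpl. rewrite Nat.add_0_r. ring.
  rewrite iterF_S. replace (i + S n)%nat with (S (i + n)) by lia. simpl. rewrite IHn. ring.
Qed.
Lemma Fw_add w x y : Fw w (fun n => Cplus (x n) (y n)) = fun n => Cplus (Fw w x n) (Fw w y n).
Proof. apply functional_extensionality; intros [|n]; simpl; ring. Qed.
Lemma Fw_scal w c x : Fw w (fun n => Cmult c (x n)) = fun n => Cmult c (Fw w x n).
Proof. apply functional_extensionality; intros [|n]; simpl; ring. Qed.
Lemma iterF_add_fun w k x y : iterF w k (fun n => Cplus (x n) (y n)) = fun n => Cplus (iterF w k x n) (iterF w k y n).
Proof. induction k; auto. rewrite !iterF_S, IHk, Fw_add; auto. Qed.
Lemma iterF_scal w k c x : iterF w k (fun n => Cmult c (x n)) = fun n => Cmult c (iterF w k x n).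
Proof. induction k; auto. rewrite !iterF_S, IHk, Fw_scal; auto. Qed.

Lemma Cmod_prodC f n : Cmod (prodC f n) = prodR (fun k => Cmod (f k)) n.
Proof. induction n; simpl. apply Cmod_1. rewrite Cmod_mult, IHn; auto. Qed.
Lemma prodR_ge0 f n : (forall k, 0 <= f k) -> 0 <= prodR f n.
Proof. intros H; induction n; simpl; [lra|]. apply Rmult_le_pos; auto. Qed.
Lemma prodR_gt0 f n : (forall k, 0 < f k) -> 0 < prodR f n.
Proof. intros H; induction n; simpl; [lra|]. apply Rmult_lt_0_compat; auto. Qed.
Lemma prodC_split f m n : prodC f (m + n) = Cmult (prodC f m) (prodC (fun k => f (m + k)%nat) n).
Proof. induction n; simpl. rewrite Nat.add_0_r. ring. rewrite Nat.add_succ_r; simpl. rewrite IHn. ring. Qed.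

Section X.
Context (p : R) (a b w : nat -> C).
Context (Hp : 1 < p) (Ha : forall n, a n <> RtoC 0).

Lemma coefinv_taylor lam : coefinv a b (taylor a b lam) = lam.
Proof.
  apply functional_extensionality; intro m. induction m; simpl.
  field; auto. rewrite IHm. field; auto.
Qed.

Lemma inX_lam x : inX p a b x -> in_lp p (coefinv a b x) /\ x = taylor a b (coefinv a b x).
Proof.
  intros [lam [Hl Hx]]. assert (E : x = taylor a b lam) by (apply functional_extensionality; auto).
  subst x. rewrite coefinv_taylor; auto.
Qed.
Lemma taylor_inX lam : in_lp p lam -> inX p a b (taylor a b lam).
Proof. intros H; exists lam; split; auto. Qed.
Lemma normX_taylor lam : normX p a b (taylor a b lam) = lpnorm p lam.
Proof. unfold normX; rewrite coefinv_taylor; auto. Qed.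
Lemma lpnorm_ge0 lam : 0 <= lpnorm p lam.
Proof. apply rpowp_ge0. Qed.
Lemma normX_ge0 x : 0 <= normX p a b x.
Proof. apply rpowp_ge0. Qed.
Lemma coef_le_lpnorm lam m : in_lp p lam -> Cmod (lam m) <= lpnorm p lam.
Proof.
  intros H. unfold lpnorm. rewrite <- (rpowp_inv (Cmod (lam m)) p) by (auto using Cmod_ge_0; lra).
  apply rpowp_le. left; apply Rinv_0_lt_compat; lra. split. apply rpowp_ge0.
  apply Series_ge_term with (f := fun n => rpowp (Cmod (lam n)) p); auto. intros; apply rpowp_ge0.
Qed.
Lemma coord_bound x m : inX p a b x -> Cmod (x m) <= Bnd a b m * normX p a b x.
Proof.
  intros H. destruct (inX_lam x H) as [Hl E]. replace (x m) with (taylor a b (coefinv a b x) m) by (rewrite <- E; auto). unfold normX, Bnd.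
  pose proof (coef_le_lpnorm _ m Hl). pose proof (Cmod_ge_0 (b (m-1)%nat)).
  pose proof (Cmod_ge_0 (a m)). pose proof (lpnorm_ge0 (coefinv a b x)).
  destruct m; simpl.
  - rewrite Cmod_mult. simpl in *. pose proof (Cmod_ge_0 (b 0%nat)). apply Rle_trans with (Cmod (a 0%nat) * lpnorm p (coefinv a b x)). apply Rmult_le_compat_l; auto. nra.
  - pose proof (coef_le_lpnorm _ m Hl). rewrite Nat.sub_0_r in *.
    eapply Rle_trans. apply Cmod_triangle. rewrite !Cmod_mult. pose proof (Cmod_ge_0 (b m)). rewrite Rmult_plus_distr_r. apply Rplus_le_compat; apply Rmult_le_compat_l; auto.
Qed.
End X.

Fixpoint csum (f : nat -> C) (n : nat) : C :=
  match n with O => RtoC 0 | S m => Cplus (csum f m) (f m) end.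
Fixpoint rsum (f : nat -> R) (n : nat) : R :=
  match n with O => 0 | S m => rsum f m + f m end.
Definition fc (N : nat) (d : nat -> C) (x : nat -> C) : C := csum (fun i => Cmult (d i) (x i)) N.

Lemma Cmod_csum f n : Cmod (csum f n) <= rsum (fun i => Cmod (f i)) n.
Proof. induction n; simpl. rewrite Cmod_0; lra. eapply Rle_trans. apply Cmod_triangle. lra. Qed.
Lemma rsum_ge0 f n : (forall i, 0 <= f i) -> 0 <= rsum f n.
Proof. intros H; induction n; simpl; [lra|]. specialize (H n); lra. Qed.
Lemma rsum_le f g n : (forall i, (i < n)%nat -> f i <= g i) -> rsum f n <= rsum g n.
Proof. intros H; induction n; simpl; [lra|]. pose proof (H n ltac:(lia)). pose proof (IHn ltac:(intros; apply H; lia)). lra. Qed.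
Lemma rsum_scal c f n : rsum (fun i => c * f i) n = c * rsum f n.
Proof. induction n; simpl; [ring|]. rewrite IHn; ring. Qed.
Lemma csum_ext f g n : (forall i, (i < n)%nat -> f i = g i) -> csum f n = csum g n.
Proof. intros H; induction n; simpl; auto. rewrite IHn, H by (auto; lia). auto. Qed.
Lemma csum_plus f g n : csum (fun i => Cplus (f i) (g i)) n = Cplus (csum f n) (csum g n).
Proof. induction n; simpl. ring. rewrite IHn; ring. Qed.
Lemma csum_scal c f n : csum (fun i => Cmult c (f i)) n = Cmult c (csum f n).
Proof. induction n; simpl. ring. rewrite IHn; ring. Qed.
Lemma csum_RtoC f n : csum (fun i => RtoC (f i)) n = RtoC (rsum f n).
Proof. induction n; simpl. auto. rewrite IHn. unfold RtoC, Cplus; simpl. f_equal; ring. Qed.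

Lemma fc_S N d x : fc (S N) d x = Cplus (fc N d x) (Cmult (d N) (x N)).
Proof. reflexivity. Qed.
Lemma fc_ext N d d' x : (forall i, (i < N)%nat -> d i = d' i) -> fc N d x = fc N d' x.
Proof. intros H; unfold fc; apply csum_ext; intros; rewrite H; auto. Qed.
Lemma fc_plusd N d e x : fc N (fun i => Cplus (d i) (e i)) x = Cplus (fc N d x) (fc N e x).
Proof. unfold fc. rewrite <- csum_plus. apply csum_ext; intros; ring. Qed.
Lemma fc_scald N c d x : fc N (fun i => Cmult c (d i)) x = Cmult c (fc N d x).
Proof. unfold fc. rewrite <- csum_scal. apply csum_ext; intros; ring. Qed.
Lemma fc_plusx N d x y : fc N d (fun n => Cplus (x n) (y n)) = Cplus (fc N d x) (fc N d y).
Proof. unfold fc. rewrite <- csum_plus. apply csum_ext; intros; ring. Qed.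
Lemma fc_scalx N d c x : fc N d (fun n => Cmult c (x n)) = Cmult c (fc N d x).
Proof. unfold fc. rewrite <- csum_scal. apply csum_ext; intros; ring. Qed.
Lemma fc_restrict N d x : fc (S N) (fun i => if Nat.ltb i N then d i else RtoC 0) x = fc N d x.
Proof.
  rewrite fc_S. rewrite Nat.ltb_irrefl. rewrite (fc_ext N _ d). ring.
  intros i Hi. apply Nat.ltb_lt in Hi. rewrite Hi; auto.
Qed.

Section Bd.
Context (p : R) (a b w : nat -> C).
Context (Hp : 1 < p) (Ha : forall n, a n <> RtoC 0).

Lemma fc_bound N d x : inX p a b x ->
  Cmod (fc N d x) <= rsum (fun i => Cmod (d i) * Bnd a b i) N * normX p a b x.
Proof.
  intros H. unfold fc. eapply Rle_trans. apply Cmod_csum. rewrite Rmult_comm, <- rsum_scal.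
  apply rsum_le. intros i _. rewrite Cmod_mult. pose proof (coord_bound p a b Hp Ha x i H).
  pose proof (Cmod_ge_0 (d i)). pose proof (normX_ge0 p a b x). nra.
Qed.

Lemma fc_dual N d : in_dual p a b (fc N d).
Proof.
  split; [|split]. intros; apply fc_plusx. intros; apply fc_scalx.
  eexists; intros x Hx; apply fc_bound; auto.
Qed.

Lemma bounded_const : Fw_bounded p a b w ->
  exists Cb, 1 <= Cb /\ forall x, inX p a b x -> inX p a b (Fw w x) /\ normX p a b (Fw w x) <= Cb * normX p a b x.
Proof.
  intros [H1 [C0 H2]]. exists (Rabs C0 + 1). split. pose proof (Rabs_pos C0); lra.
  intros x Hx. split; auto. eapply Rle_trans. apply H2; auto. pose proof (normX_ge0 p a b x).
  pose proof (Rle_abs C0). nra.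
Qed.

Lemma iter_bound Cb : 1 <= Cb -> (forall x, inX p a b x -> inX p a b (Fw w x) /\ normX p a b (Fw w x) <= Cb * normX p a b x) ->
  forall n x, inX p a b x -> inX p a b (iterF w n x) /\ normX p a b (iterF w n x) <= Cb ^ n * normX p a b x.
Proof.
  intros HC H. induction n; intros x Hx. simpl. split; auto; lra.
  rewrite iterF_S. destruct (IHn x Hx) as [H1 H2]. destruct (H _ H1) as [H3 H4]. split; auto.
  simpl. eapply Rle_trans. apply H4. rewrite Rmult_assoc. apply Rmult_le_compat_l; lra.
Qed.

Lemma coefinv_fc m : exists e, forall x, coefinv a b x m = fc (S m) e x.
Proof.
  induction m.
  - exists (fun _ => Cinv (a 0%nat)). intros x. unfold fc; simpl. field; auto.
  - destruct IHm as [e He].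
    exists (fun i => if Nat.eqb i (S m) then Cinv (a (S m)) else Cdiv (Cmult (Copp (b m)) (e i)) (a (S m))).
    intros x. rewrite fc_S. rewrite Nat.eqb_refl.
    rewrite (fc_ext (S m) _ (fun i => Cmult (Cdiv (Copp (b m)) (a (S m))) (e i))).
    rewrite fc_scald, <- He. simpl. field; auto.
    intros i Hi. destruct (Nat.eqb_spec i (S m)); [lia|]. field; auto.
Qed.

Lemma rep N (y : nat -> C) : exists d, forall x, csum (fun m => Cmult (coefinv a b x m) (y m)) N = fc N d x.
Proof.
  induction N. exists (fun _ => RtoC 0). intros; reflexivity.
  destruct IHN as [d Hd]. destruct (coefinv_fc N) as [e He].
  exists (fun i => Cplus (if Nat.ltb i N then d i else RtoC 0) (Cmult (y N) (e i))).
  intros x. simpl. rewrite Hd, He, fc_plusd, fc_restrict, fc_scald. ring.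
Qed.
End Bd.

Definition unitC (m : nat) : nat -> C := fun i => if Nat.eqb i m then RtoC 1 else RtoC 0.
Definition headL (lam : nat -> C) (N : nat) : nat -> C := fun m => if Nat.ltb m N then lam m else RtoC 0.
Definition tailL (lam : nat -> C) (N : nat) : nat -> C := fun m => if Nat.ltb m N then RtoC 0 else lam m.
Definition Np (p : R) (lam : nat -> C) : R := Series (fun n => rpowp (Cmod (lam n)) p).

Fixpoint itern (g : nat -> nat) (k : nat) : nat := match k with O => O | S k => g (itern g k) end.

Lemma Cmod_RtoC_pos r : 0 <= r -> Cmod (RtoC r) = r.
Proof. intros; rewrite Cmod_R, Rabs_pos_eq; auto. Qed.

Section Dens.
Context (p : R) (a b : nat -> C).
Context (Hp : 1 < p) (Ha : forall n, a n <> RtoC 0).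

Lemma rpowp_Cmod0 : rpowp (Cmod (RtoC 0)) p = 0.
Proof. rewrite Cmod_0; apply rpowp_0. Qed.

Lemma in_lp_le u lam : (forall m, Cmod (u m) <= Cmod (lam m)) -> in_lp p lam -> in_lp p u /\ Np p u <= Np p lam.
Proof.
  intros H Hl. assert (Hu : in_lp p u).
  { unfold in_lp. apply (@ex_series_le R_AbsRing R_CompleteNormedModule) with (b := fun n => rpowp (Cmod (lam n)) p); auto.
    intros n. change (norm (rpowp (Cmod (u n)) p)) with (Rabs (rpowp (Cmod (u n)) p)).
    rewrite Rabs_pos_eq by apply rpowp_ge0. apply rpowp_le; [lra|]. split; auto using Cmod_ge_0. }
  split; auto. unfold Np. apply Series_le; auto. intros n; split. apply rpowp_ge0.
  apply rpowp_le; [lra|]. split; auto using Cmod_ge_0.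
Qed.
Lemma lpnorm_Np lam : lpnorm p lam = rpowp (Np p lam) (/ p).
Proof. reflexivity. Qed.
Lemma Np_ge0 lam : in_lp p lam -> 0 <= Np p lam.
Proof. intros H; apply Series_ge0; auto. intros; apply rpowp_ge0. Qed.
Lemma lpnorm_le u lam : (forall m, Cmod (u m) <= Cmod (lam m)) -> in_lp p lam -> lpnorm p u <= lpnorm p lam.
Proof.
  intros H Hl. destruct (in_lp_le u lam H Hl) as [Hu HN]. rewrite !lpnorm_Np.
  apply rpowp_le. left; apply Rinv_0_lt_compat; lra. split; auto. apply Np_ge0; auto.
Qed.
Lemma in_lp_fin u M : (forall m, (M <= m)%nat -> u m = RtoC 0) -> in_lp p u.
Proof. intros H. apply ex_series_fin with M. intros n Hn. rewrite H; auto. apply rpowp_Cmod0. Qed.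

Lemma taylor_plus u v : taylor a b (fun n => Cplus (u n) (v n)) = fun n => Cplus (taylor a b u n) (taylor a b v n).
Proof. apply functional_extensionality; intros [|m]; simpl; ring. Qed.
Lemma taylor_scal c u : taylor a b (fun n => Cmult c (u n)) = fun n => Cmult c (taylor a b u n).
Proof. apply functional_extensionality; intros [|m]; simpl; ring. Qed.
Lemma taylor_zero : taylor a b (fun _ => RtoC 0) = fun _ => RtoC 0.
Proof. apply functional_extensionality; intros [|m]; simpl; ring. Qed.
Lemma head_tail lam N : lam = fun m => Cplus (headL lam N m) (tailL lam N m).
Proof. apply functional_extensionality; intros m; unfold headL, tailL; destruct (Nat.ltb m N); ring. Qed.

Lemma Np_tail_small lam : in_lp p lam -> forall eta, 0 < eta -> exists M, Np p (tailL lam M) < eta.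
Proof.
  intros Hl eta Heta. set (f := fun n => rpowp (Cmod (lam n)) p).
  assert (Hs : is_series f (Series f)) by (apply Series_correct; auto).
  assert (Hlim : is_lim_seq (sum_n f) (Series f)) by exact Hs.
  apply is_lim_seq_spec in Hlim. destruct (Hlim (mkposreal eta Heta)) as [N HN].
  exists (S N). unfold Np.
  rewrite (Series_ext _ (fun n => if Nat.ltb n (S N) then 0 else f n)).
  2:{ intros n; unfold tailL, f; destruct (Nat.ltb n (S N)); auto. apply rpowp_Cmod0. }
  rewrite Series_incr_n_aux with (n := S N).
  2:{ intros k Hk. apply Nat.ltb_lt in Hk; rewrite Hk; auto. }
  rewrite (Series_ext _ (fun k => f (S N + k)%nat)).
  2:{ intros k. destruct (Nat.ltb_spec (S N + k) (S N)); [lia|auto]. }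
  pose proof (Series_incr_n f (S N) ltac:(lia) Hl) as E. simpl pred in E.
  specialize (HN N (le_n _)). simpl in HN. rewrite sum_n_Reals in HN.
  apply Rabs_lt_between in HN. lra.
Qed.

Lemma zero_val psi : in_dual p a b psi -> psi (fun _ => RtoC 0) = RtoC 0.
Proof.
  intros [_ [Hs _]]. assert (H0 : inX p a b (fun _ => RtoC 0)).
  { rewrite <- taylor_zero. apply taylor_inX. apply in_lp_fin with O; auto. }
  pose proof (Hs (RtoC 0) _ H0) as E.
  transitivity (psi (fun n => Cmult (RtoC 0) ((fun _ : nat => RtoC 0) n))).
  f_equal; apply functional_extensionality; intros; ring.
  rewrite E; ring.
Qed.

Lemma block psi eps N x : in_dual p a b psi -> 0 < eps -> inX p a b x ->
  (forall m, (m < N)%nat -> coefinv a b x m = RtoC 0) -> eps * normX p a b x < Cmod (psi x) ->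
  exists M beta, in_lp p beta /\ (forall m, (m < N)%nat \/ (M <= m)%nat -> beta m = RtoC 0) /\
    eps * lpnorm p beta < Cmod (psi (taylor a b beta)).
Proof.
  intros Hpsi He Hx Hz Hgt. pose proof Hpsi as [Hadd [Hsc [Cp HCp]]].
  set (lam := coefinv a b x). destruct (inX_lam p a b Ha x Hx) as [Hl Ex]. fold lam in Hl, Ex.
  set (delta := Cmod (psi x) - eps * normX p a b x).
  set (K := Rabs Cp + 1).
  assert (HK : 0 < K) by (unfold K; pose proof (Rabs_pos Cp); lra).
  assert (Hd : 0 < delta) by (unfold delta; lra).
  assert (Heta : 0 < rpowp (delta / K) p) by (apply rpowp_gt0; apply Rdiv_lt_0_compat; lra).
  destruct (Np_tail_small lam Hl _ Heta) as [M HM].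
  exists M, (headL lam M).
  assert (Hh : in_lp p (headL lam M)).
  { apply (in_lp_le _ lam); auto. intros m; unfold headL; destruct (Nat.ltb m M); [lra|]. rewrite Cmod_0; apply Cmod_ge_0. }
  assert (Ht : in_lp p (tailL lam M)).
  { apply (in_lp_le _ lam); auto. intros m; unfold tailL; destruct (Nat.ltb m M); [|lra]. rewrite Cmod_0; apply Cmod_ge_0. }
  split; auto. split.
  { intros m [Hm|Hm]; unfold headL. destruct (Nat.ltb m M); auto.
    destruct (Nat.ltb_spec m M); [lia|auto]. }
  assert (Ex2 : x = fun n => Cplus (taylor a b (headL lam M) n) (taylor a b (tailL lam M) n)).
  { rewrite Ex at 1. rewrite (head_tail lam M) at 1. apply taylor_plus. }
  assert (Epsi : psi x = Cplus (psi (taylor a b (headL lam M))) (psi (taylor a b (tailL lam M)))).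
  { rewrite Ex2 at 1. apply Hadd; apply taylor_inX; auto. }
  assert (Htl : Cmod (psi (taylor a b (tailL lam M))) < delta).
  { eapply Rle_lt_trans. apply HCp. apply taylor_inX; auto. rewrite normX_taylor by auto.
    assert (lpnorm p (tailL lam M) < delta / K).
    { rewrite lpnorm_Np. rewrite <- (rpowp_inv (delta / K) p) by (try lra; apply Rlt_le, Rdiv_lt_0_compat; lra).
      apply rpowp_lt. apply Rinv_0_lt_compat; lra. split; auto. apply Np_ge0; auto. }
    pose proof (lpnorm_ge0 p (tailL lam M)). pose proof (Rle_abs Cp).
    apply Rle_lt_trans with (K * lpnorm p (tailL lam M)). unfold K; nra.
    apply Rmult_lt_compat_l with (r := K) in H; auto. replace (K * (delta / K)) with delta in H by (field; lra). auto. }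
  assert (Hle : lpnorm p (headL lam M) <= normX p a b x).
  { unfold normX. fold lam. apply lpnorm_le; auto. intros m; unfold headL; destruct (Nat.ltb m M); [lra|]. rewrite Cmod_0; apply Cmod_ge_0. }
  pose proof (Cmod_triangle (psi (taylor a b (headL lam M))) (psi (taylor a b (tailL lam M)))).
  rewrite <- Epsi in H. unfold delta in Htl. nra.
Qed.
End Dens.

Lemma itern_mono g : (forall n, (n <= g n)%nat) -> forall k K, (k <= K)%nat -> (itern g k <= itern g K)%nat.
Proof. intros Hg k K H; induction H; auto. simpl. specialize (Hg (itern g m)). lia. Qed.

Lemma Rpower_big s A : 0 < s -> exists K : nat, (1 <= K)%nat /\ A < Rpower (INR K) s.
Proof.
  intros Hs. set (X := Rabs A + 1). assert (HX : 0 < X) by (unfold X; pose proof (Rabs_pos A); lra).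
  destruct (archimed (Rpower X (/ s))) as [H1 _].
  assert (Hpos : 0 < Rpower X (/ s)) by (unfold Rpower; apply exp_pos).
  set (K := S (Z.to_nat (up (Rpower X (/ s))))). exists K. split. unfold K; lia.
  assert (Rpower X (/ s) <= INR K).
  { unfold K. rewrite S_INR. rewrite INR_IZR_INZ, Z2Nat.id. lra.
    apply le_IZR. lra. }
  apply Rlt_le_trans with X. unfold X; pose proof (Rle_abs A); lra.
  replace X with (Rpower (Rpower X (/ s)) s) at 1.
  apply Rle_Rpower_l; lra. rewrite Rpower_mult, Rinv_l, Rpower_1; lra.
Qed.

Section Dens2.
Context (p : R) (a b : nat -> C).
Context (Hp : 1 < p) (Ha : forall n, a n <> RtoC 0).

Lemma Np_scal c u : in_lp p u -> Np p (fun m => Cmult c (u m)) = rpowp (Cmod c) p * Np p u.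
Proof.
  intros Hu. unfold Np. rewrite <- Series_scal_l. apply Series_ext; intros n.
  rewrite Cmod_mult, rpowp_mult; auto using Cmod_ge_0.
Qed.
Lemma in_lp_scal c u : in_lp p u -> in_lp p (fun m => Cmult c (u m)).
Proof.
  intros Hu. unfold in_lp. eapply ex_series_ext. 2: apply (@ex_series_scal_l R_AbsRing R_NormedModule (rpowp (Cmod c) p) _ Hu).
  intros n. simpl. change (scal (rpowp (Cmod c) p) (rpowp (Cmod (u n)) p)) with (rpowp (Cmod c) p * rpowp (Cmod (u n)) p).
  rewrite Cmod_mult, rpowp_mult; auto using Cmod_ge_0.
Qed.

Lemma blocks_contra psi eps : in_dual p a b psi -> 0 < eps ->
  (forall N, exists q : nat * (nat -> C), in_lp p (snd q) /\
      (forall m, (m < N)%nat \/ (fst q <= m)%nat -> snd q m = RtoC 0) /\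
      eps * lpnorm p (snd q) < Cmod (psi (taylor a b (snd q)))) -> False.
Proof.
  intros Hpsi He H. pose proof Hpsi as [Hadd [Hsc [Cp HCp]]].
  set (F := fun N => proj1_sig (constructive_indefinite_description _ (H N))).
  assert (HF : forall N, in_lp p (snd (F N)) /\ (forall m, (m < N)%nat \/ (fst (F N) <= m)%nat -> snd (F N) m = RtoC 0) /\
      eps * lpnorm p (snd (F N)) < Cmod (psi (taylor a b (snd (F N))))).
  { intros N. unfold F. destruct (constructive_indefinite_description _ (H N)); simpl; auto. }
  set (g := fun N => Nat.max (fst (F N)) N).
  set (Ns := itern g).
  assert (Hg : forall n, (n <= g n)%nat) by (intros; unfold g; lia).
  set (beta := fun k => snd (F (Ns k))).
  set (z := fun k => psi (taylor a b (beta k))).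
  set (L := fun k => lpnorm p (beta k)).
  set (KC := Rabs Cp + 1).
  assert (HKC : 0 < KC) by (unfold KC; pose proof (Rabs_pos Cp); lra).
  assert (Hbeta : forall k, in_lp p (beta k)) by (intros; apply HF).
  assert (Hz : forall k, Cmod (z k) <= KC * L k).
  { intros k. unfold z, L. eapply Rle_trans. apply HCp. apply taylor_inX; auto.
    rewrite normX_taylor by auto. pose proof (lpnorm_ge0 p (beta k)). pose proof (Rle_abs Cp). unfold KC; nra. }
  assert (HzL : forall k, eps * L k < Cmod (z k)) by (intros; apply HF).
  assert (HL : forall k, 0 < L k).
  { intros k. pose proof (lpnorm_ge0 p (beta k)). fold (L k) in H0. destruct H0; auto.
    specialize (Hz k); specialize (HzL k). rewrite <- H0 in *. nra. }
  assert (Hz0 : forall k, 0 < Cmod (z k)).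
  { intros k. specialize (HzL k); specialize (HL k). nra. }
  set (s := fun k => Cdiv (Cconj (z k)) (RtoC (Cmod (z k) * L k))).
  set (beta' := fun k m => Cmult (s k) (beta k m)).
  assert (Hb'lp : forall k, in_lp p (beta' k)) by (intros; apply in_lp_scal; auto).
  assert (Hb'Np : forall k, Np p (beta' k) = 1).
  { intros k. unfold beta'. rewrite Np_scal by auto.
    assert (Cmod (s k) = / L k).
    { pose proof (Hz0 k); pose proof (HL k).
      assert (Hne : RtoC (Cmod (z k) * L k) <> RtoC 0) by (intro E; injection E; intros; nra).
      unfold s. rewrite Cmod_div by auto. rewrite Cmod_conj, Cmod_R, Rabs_pos_eq by nra. field; lra. }
    rewrite H0. assert (Np p (beta k) = rpowp (L k) p).
    { unfold L. rewrite lpnorm_Np. rewrite rpowp_inv'; auto. lra. apply Np_ge0; auto. }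
    rewrite H1, <- rpowp_mult. rewrite Rinv_l. apply rpowp_1. apply Rgt_not_eq, HL.
    left; apply Rinv_0_lt_compat, HL. left; apply HL. }
  assert (Hb'psi : forall k, psi (taylor a b (beta' k)) = RtoC (Cmod (z k) / L k)).
  { intros k. unfold beta'. rewrite taylor_scal. rewrite Hsc by (apply taylor_inX; auto). fold (z k).
    unfold s. assert (E : Cmult (Cconj (z k)) (z k) = RtoC (Cmod (z k) ^ 2)).
    { rewrite Cmod2_conj. ring. }
    assert (RtoC (Cmod (z k) * L k) <> RtoC 0).
    { intro E2; injection E2; intros. specialize (Hz0 k); specialize (HL k). nra. }
    unfold Cdiv. rewrite Cmult_comm, Cmult_assoc, (Cmult_comm (z k)), E.
    unfold RtoC, Cinv, Cmult; simpl. specialize (Hz0 k); specialize (HL k).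
    f_equal; field; lra. }
  assert (Hsupp : forall k m, (m < Ns k)%nat \/ (Ns (S k) <= m)%nat -> beta' k m = RtoC 0).
  { intros k m Hm. unfold beta'. unfold beta. rewrite (proj1 (proj2 (HF (Ns k)))). ring.
    destruct Hm as [Hm|Hm]; [left; auto|right]. change (Ns (S k)) with (g (Ns k)) in Hm. unfold g in Hm. lia. }
  set (v := fun K m => csum (fun k => beta' k m) K).
  assert (Hv : forall K, in_lp p (v K) /\ Np p (v K) = INR K /\ (forall m, (Ns K <= m)%nat -> v K m = RtoC 0) /\
    psi (taylor a b (v K)) = RtoC (rsum (fun k => Cmod (z k) / L k) K)).
  { induction K.
    - assert (v 0%nat = fun _ => RtoC 0) by reflexivity. rewrite H0.
      split. apply in_lp_fin with O; auto. split. unfold Np. apply Series_0'; intros; apply rpowp_Cmod0.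
      split; auto. rewrite taylor_zero. rewrite (zero_val p a b psi Hpsi); auto.
    - destruct IHK as [H1 [H2 [H3 H4]]].
      assert (Ev : v (S K) = fun m => Cplus (v K m) (beta' K m)) by reflexivity.
      assert (Hsup : forall m, (Ns (S K) <= m)%nat -> v (S K) m = RtoC 0).
      { intros m Hm. rewrite Ev. simpl. rewrite H3, Hsupp; [ring| |]. right; auto.
        pose proof (itern_mono g Hg K (S K) ltac:(lia)). fold Ns in H0. lia. }
      split. apply in_lp_fin with (Ns (S K)); auto.
      split.
      + unfold Np. rewrite Ev.
        rewrite (Series_ext _ (fun m => rpowp (Cmod (v K m)) p + rpowp (Cmod (beta' K m)) p)).
        rewrite Series_plus; [|apply H1|apply Hb'lp]. fold (Np p (v K)) (Np p (beta' K)). rewrite H2, Hb'Np, S_INR; auto.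
        intros m. destruct (Nat.lt_ge_cases m (Ns K)).
        * rewrite (Hsupp K m) by (left; auto). rewrite Cplus_0_r, rpowp_Cmod0. ring.
        * rewrite (H3 m) by auto. rewrite Cplus_0_l, rpowp_Cmod0. ring.
      + split; auto. rewrite Ev, taylor_plus. rewrite Hadd by (apply taylor_inX; auto). rewrite H4, Hb'psi.
        simpl. unfold RtoC, Cplus; simpl. f_equal; ring. }
  set (s0 := 1 - / p).
  assert (Hs0 : 0 < s0) by (unfold s0; assert (/ p < 1) by (rewrite <- Rinv_1; apply Rinv_lt_contravar; lra); lra).
  destruct (Rpower_big s0 (KC / eps) Hs0) as [K [HK1 HK2]].
  destruct (Hv K) as [H1 [H2 [_ H4]]].
  assert (HINR : 0 < INR K) by (apply lt_0_INR; lia).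
  assert (Hlow : forall K0, eps * INR K0 <= rsum (fun k => Cmod (z k) / L k) K0).
  { induction K0 as [|K0 IH]. simpl; lra. simpl rsum. rewrite S_INR.
    assert (eps < Cmod (z K0) / L K0).
    { specialize (HL K0); specialize (HzL K0). apply Rmult_lt_reg_r with (L K0); auto.
      unfold Rdiv; rewrite Rmult_assoc, Rinv_l, Rmult_1_r; lra. }
    lra. }
  specialize (Hlow K).
  assert (Hup : Cmod (psi (taylor a b (v K))) <= KC * Rpower (INR K) (/ p)).
  { eapply Rle_trans. apply HCp. apply taylor_inX; auto. rewrite normX_taylor by auto.
    rewrite lpnorm_Np, H2, rpowp_pos by auto. pose proof (Rle_abs Cp). assert (0 < Rpower (INR K) (/p)) by (unfold Rpower; apply exp_pos).
    unfold KC; nra. }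
  rewrite H4, Cmod_RtoC_pos in Hup. 2: { pose proof (Rmult_lt_0_compat eps (INR K) He HINR); lra. }
  assert (EK : INR K = Rpower (INR K) (/ p) * Rpower (INR K) s0).
  { rewrite <- Rpower_plus. unfold s0. replace (/ p + (1 - / p)) with 1 by ring. rewrite Rpower_1; auto. }
  assert (0 < Rpower (INR K) (/p)) by (unfold Rpower; apply exp_pos).
  assert (eps * Rpower (INR K) s0 <= KC).
  { apply Rmult_le_reg_l with (Rpower (INR K) (/p)); auto. rewrite EK in Hlow. nra. }
  assert (eps * (KC / eps) = KC) by (field; lra). nra.
Qed.

Lemma claimA psi eps : in_dual p a b psi -> 0 < eps -> exists N, forall x, inX p a b x ->
  (forall m, (m < N)%nat -> coefinv a b x m = RtoC 0) -> Cmod (psi x) <= eps * normX p a b x.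
Proof.
  intros Hpsi He. apply NNPP; intro Hn. apply (blocks_contra psi eps Hpsi He). intros N.
  assert (exists x, inX p a b x /\ (forall m, (m < N)%nat -> coefinv a b x m = RtoC 0) /\ eps * normX p a b x < Cmod (psi x)).
  { apply NNPP; intro Hn2. apply Hn. exists N. intros x Hx Hz. apply Rnot_lt_le. intro Hlt. apply Hn2. exists x; auto. }
  destruct H as [x [Hx [Hz Hlt]]].
  destruct (block p a b Hp Ha psi eps N x Hpsi He Hx Hz Hlt) as [M [beta [H1 [H2 H3]]]].
  exists (M, beta); simpl; auto.
Qed.

Lemma density psi eps : in_dual p a b psi -> 0 < eps -> exists N d, forall x, inX p a b x ->
  Cmod (Cminus (psi x) (fc N d x)) <= eps * normX p a b x.
Proof.
  intros Hpsi He. pose proof Hpsi as [Hadd [Hsc [Cp HCp]]].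
  destruct (claimA psi eps Hpsi He) as [N HN].
  set (y := fun m => psi (taylor a b (unitC m))).
  destruct (rep a b Ha N y) as [d Hd]. exists N, d. intros x Hx.
  set (lam := coefinv a b x). destruct (inX_lam p a b Ha x Hx) as [Hl Ex]. fold lam in Hl, Ex.
  assert (Hunit : forall m, in_lp p (unitC m)).
  { intros m. apply in_lp_fin with (S m). intros n Hn. unfold unitC. destruct (Nat.eqb_spec n m); [lia|auto]. }
  assert (Hhead : forall N', in_lp p (headL lam N') /\ psi (taylor a b (headL lam N')) = csum (fun m => Cmult (lam m) (y m)) N').
  { induction N'.
    - assert (headL lam 0 = fun _ => RtoC 0) by reflexivity. rewrite H. split. apply in_lp_fin with O; auto.
      rewrite taylor_zero. apply (zero_val p a b psi Hpsi).
    - destruct IHN' as [H1 H2].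
      assert (E : headL lam (S N') = fun i => Cplus (headL lam N' i) (Cmult (lam N') (unitC N' i))).
      { apply functional_extensionality; intros i. unfold headL, unitC.
        destruct (Nat.ltb_spec i (S N')), (Nat.ltb_spec i N'), (Nat.eqb_spec i N'); try lia; try subst i; ring. }
      split. apply in_lp_fin with (S N'). intros n Hn. unfold headL. destruct (Nat.ltb_spec n (S N')); [lia|auto].
      rewrite E, taylor_plus, taylor_scal. rewrite Hadd. rewrite Hsc. rewrite H2. simpl. fold (y N'). ring.
      apply taylor_inX; auto. apply taylor_inX; auto. rewrite <- taylor_scal. apply taylor_inX. apply in_lp_scal; auto. }
  assert (Ht : in_lp p (tailL lam N)).
  { apply (in_lp_le p Hp _ lam); auto. intros m; unfold tailL; destruct (Nat.ltb m N); [|lra]. rewrite Cmod_0; apply Cmod_ge_0. }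
  destruct (Hhead N) as [Hh1 Hh2].
  assert (Epsi : psi x = Cplus (psi (taylor a b (headL lam N))) (psi (taylor a b (tailL lam N)))).
  { rewrite <- Hadd by (apply taylor_inX; auto). rewrite <- taylor_plus, <- head_tail, <- Ex; auto. }
  rewrite <- Hd. fold lam. rewrite <- Hh2, Epsi.
  replace (Cminus (Cplus (psi (taylor a b (headL lam N))) (psi (taylor a b (tailL lam N)))) (psi (taylor a b (headL lam N))))
    with (psi (taylor a b (tailL lam N))) by ring.
  eapply Rle_trans. apply HN. apply taylor_inX; auto.
  intros m Hm. rewrite coefinv_taylor by auto. unfold tailL. apply Nat.ltb_lt in Hm; rewrite Hm; auto.
  rewrite normX_taylor by auto. apply Rmult_le_compat_l. lra.
  unfold normX; fold lam. apply (lpnorm_le p Hp); auto.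
  intros m; unfold tailL; destruct (Nat.ltb m N); [|lra]. rewrite Cmod_0; apply Cmod_ge_0.
Qed.
End Dens2.

Definition codeAt (r i : nat) : nat := fst (Cantor.of_nat (Nat.iter i (fun r => snd (Cantor.of_nat r)) r)).
Definition RQ (c : nat) : C :=
  let (u1, c1) := Cantor.of_nat c in let (u2, c2) := Cantor.of_nat c1 in
  let (v1, c3) := Cantor.of_nat c2 in let (v2, P) := Cantor.of_nat c3 in
  ((INR u1 - INR u2) / (INR P + 1), (INR v1 - INR v2) / (INR P + 1)).
Definition TN (k : nat) : nat := fst (Cantor.of_nat (fst (Cantor.of_nat k))).
Definition Tr (k : nat) : nat := snd (Cantor.of_nat (fst (Cantor.of_nat k))).
Definition tcoef (k i : nat) : C := RQ (codeAt (Tr k) i).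
Definition tgt (k : nat) : (nat -> C) -> C := fc (TN k) (tcoef k).

Lemma codeAt_surj N (f : nat -> nat) : exists r, forall i, (i < N)%nat -> codeAt r i = f i.
Proof.
  revert f; induction N; intros f. exists O; intros; lia.
  destruct (IHN (fun i => f (S i))) as [r Hr]. exists (Cantor.to_nat (f O, r)).
  intros [|i] Hi; unfold codeAt.
  - change (Nat.iter 0 (fun r0 => snd (Cantor.of_nat r0)) (Cantor.to_nat (f O, r))) with (Cantor.to_nat (f O, r)).
    rewrite Cantor.cancel_of_to; auto.
  - rewrite Nat.iter_succ_r. cbv beta. rewrite Cantor.cancel_of_to. cbn [snd].
    apply Hr; lia.
Qed.

Lemma IZR_diff z : IZR z = INR (Z.to_nat z) - INR (Z.to_nat (- z)).
Proof.
  destruct z; simpl. lra.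
  rewrite INR_IZR_INZ, positive_nat_Z. lra.
  rewrite INR_IZR_INZ, positive_nat_Z. rewrite <- Pos2Z.opp_pos. rewrite opp_IZR. lra.
Qed.

Lemma real_approx t Q : 0 < Q -> exists u1 u2 : nat, Rabs (t - (INR u1 - INR u2) / Q) <= / Q.
Proof.
  intros HQ. destruct (archimed (t * Q)) as [H1 H2].
  exists (Z.to_nat (up (t * Q))), (Z.to_nat (- up (t * Q))). rewrite <- IZR_diff.
  replace (t - IZR (up (t * Q)) / Q) with ((t * Q - IZR (up (t * Q))) / Q) by (field; lra).
  unfold Rdiv. rewrite Rabs_mult, Rabs_inv, (Rabs_pos_eq Q) by lra.
  rewrite <- (Rmult_1_l (/ Q)) at 2. apply Rmult_le_compat_r. left; apply Rinv_0_lt_compat; lra.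
  apply Rabs_le; lra.
Qed.

Lemma RQ_dense z eta : 0 < eta -> exists c, Cmod (Cminus z (RQ c)) <= eta.
Proof.
  intros He. destruct (archimed (2 / eta)) as [H1 _].
  set (P := Z.to_nat (up (2 / eta))).
  assert (HP : 2 / eta < INR P + 1).
  { unfold P. destruct (Z_le_gt_dec 0 (up (2 / eta))).
    rewrite INR_IZR_INZ, Z2Nat.id by auto. lra.
    assert (2 / eta > 0) by (apply Rdiv_lt_0_compat; lra). assert (IZR 0 < IZR (up (2 / eta))) by (simpl; lra). apply lt_IZR in H0. lia. }
  set (Q := INR P + 1). assert (HQ : 0 < Q) by (unfold Q; pose proof (pos_INR P); lra).
  destruct (real_approx (fst z) Q HQ) as [u1 [u2 Hu]].
  destruct (real_approx (snd z) Q HQ) as [v1 [v2 Hv]].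
  exists (Cantor.to_nat (u1, Cantor.to_nat (u2, Cantor.to_nat (v1, Cantor.to_nat (v2, P))))).
  unfold RQ. rewrite !Cantor.cancel_of_to. fold Q.
  eapply Rle_trans. apply Cmod_2Rmax. destruct z as [zr zi]. simpl in Hu, Hv.
  assert (sqrt 2 <= 2). { rewrite <- (sqrt_square 2) at 2 by lra. apply sqrt_le_1_alt; lra. }
  assert (2 / Q <= eta).
  { apply Rmult_le_reg_r with Q; auto. unfold Rdiv. rewrite Rmult_assoc, Rinv_l by lra.
    apply Rmult_lt_compat_l with (r := eta) in HP; auto. unfold Rdiv in HP. rewrite <- Rmult_assoc, (Rmult_comm eta 2), Rmult_assoc, Rinv_r in HP by lra. fold Q in HP. lra. }
  apply Rle_trans with (sqrt 2 * / Q).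
  apply Rmult_le_compat_l. apply sqrt_pos. apply Rmax_lub. exact Hu. exact Hv.
  assert (0 < / Q) by (apply Rinv_0_lt_compat; lra). unfold Rdiv in *. nra.
Qed.

Lemma fc_minusd N d e x : fc N (fun i => Cminus (d i) (e i)) x = Cminus (fc N d x) (fc N e x).
Proof. unfold fc; induction N; simpl. ring. rewrite IHN; ring. Qed.

Section Tg.
Context (p : R) (a b : nat -> C).
Context (Hp : 1 < p) (Ha : forall n, a n <> RtoC 0).

Lemma target_dense psi eps : in_dual p a b psi -> 0 < eps -> forall L, exists k, (L <= k)%nat /\
  forall x, inX p a b x -> Cmod (Cminus (psi x) (tgt k x)) <= eps * normX p a b x.
Proof.
  intros Hpsi He L. destruct (density p a b Hp Ha psi (eps / 2) Hpsi ltac:(lra)) as [N [d Hd]].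
  set (SB := rsum (fun i => Bnd a b i) N + 1).
  assert (HSB : 0 < SB) by (unfold SB; pose proof (rsum_ge0 (fun i => Bnd a b i) N (Bnd_ge0 a b)); lra).
  set (eta := eps / 2 / SB). assert (Heta : 0 < eta) by (unfold eta; apply Rdiv_lt_0_compat; lra).
  assert (Hc : forall i, exists c, Cmod (Cminus (d i) (RQ c)) <= eta) by (intros; apply RQ_dense; auto).
  set (f := fun i => proj1_sig (constructive_indefinite_description _ (Hc i))).
  assert (Hf : forall i, Cmod (Cminus (d i) (RQ (f i))) <= eta).
  { intros i; unfold f; destruct (constructive_indefinite_description _ (Hc i)); auto. }
  destruct (codeAt_surj N f) as [r Hr].
  set (k := Cantor.to_nat (Cantor.to_nat (N, r), L)).
  exists k. split. unfold k. pose proof (Cantor.to_nat_non_decreasing (Cantor.to_nat (N, r)) L). lia.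
  assert (HTN : TN k = N) by (unfold TN, k; rewrite Cantor.cancel_of_to; cbn [fst]; rewrite Cantor.cancel_of_to; reflexivity).
  assert (HTr : Tr k = r) by (unfold Tr, k; rewrite Cantor.cancel_of_to; cbn [fst]; rewrite Cantor.cancel_of_to; reflexivity).
  intros x Hx. unfold tgt. rewrite HTN.
  replace (Cminus (psi x) (fc N (tcoef k) x)) with
    (Cplus (Cminus (psi x) (fc N d x)) (fc N (fun i => Cminus (d i) (tcoef k i)) x)).
  2:{ rewrite fc_minusd. ring. }
  eapply Rle_trans. apply Cmod_triangle.
  pose proof (Hd x Hx).
  pose proof (fc_bound p a b Hp Ha N (fun i => Cminus (d i) (tcoef k i)) x Hx).
  assert (rsum (fun i => Cmod (Cminus (d i) (tcoef k i)) * Bnd a b i) N <= eta * SB).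
  { apply Rle_trans with (rsum (fun i => eta * Bnd a b i) N).
    apply rsum_le. intros i Hi. unfold tcoef. rewrite HTr, Hr by auto. apply Rmult_le_compat_r. apply Bnd_ge0. auto.
    rewrite rsum_scal. apply Rmult_le_compat_l; [lra|]. unfold SB. apply Rle_trans with (rsum (fun i => Bnd a b i) N + 0); [right; rewrite Rplus_0_r; reflexivity| lra]. }
  assert (eta * SB = eps / 2) by (unfold eta; field; lra).
  pose proof (normX_ge0 p a b x). nra.
Qed.
End Tg.

Definition CSeries (f : nat -> C) : C := (Series (fun k => fst (f k)), Series (fun k => snd (f k))).

Lemma fst_le_Cmod z : Rabs (fst z) <= Cmod z.
Proof. eapply Rle_trans; [apply Rmax_l|apply Rmax_Cmod]. Qed.
Lemma snd_le_Cmod z : Rabs (snd z) <= Cmod z.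
Proof. eapply Rle_trans; [apply Rmax_r|apply Rmax_Cmod]. Qed.

Lemma ex_le (f : nat -> R) (g : nat -> R) : (forall k, Rabs (f k) <= g k) -> ex_series g ->
  ex_series (fun k => Rabs (f k)) /\ ex_series f.
Proof.
  intros H Hg. assert (ex_series (fun k => Rabs (f k))).
  { apply (@ex_series_le R_AbsRing R_CompleteNormedModule) with g; auto. intros n.
    change (norm (Rabs (f n))) with (Rabs (Rabs (f n))). rewrite Rabs_Rabsolu; auto. }
  split; auto. apply ex_series_Rabs; auto.
Qed.

Lemma CSeries_bound f g : (forall k, Cmod (f k) <= g k) -> ex_series g ->
  ex_series (fun k => fst (f k)) /\ ex_series (fun k => snd (f k)) /\ Cmod (CSeries f) <= 2 * Series g.
Proof.
  intros H Hg.
  destruct (ex_le (fun k => fst (f k)) g) as [H1 H2]. intros; eapply Rle_trans; [apply fst_le_Cmod|auto]. auto.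
  destruct (ex_le (fun k => snd (f k)) g) as [H3 H4]. intros; eapply Rle_trans; [apply snd_le_Cmod|auto]. auto.
  split; auto. split; auto.
  assert (Rabs (Series (fun k => fst (f k))) <= Series g).
  { eapply Rle_trans. apply Series_Rabs; auto. apply Series_le; auto. intros; split. apply Rabs_pos.
    eapply Rle_trans; [apply fst_le_Cmod|auto]. }
  assert (Rabs (Series (fun k => snd (f k))) <= Series g).
  { eapply Rle_trans. apply Series_Rabs; auto. apply Series_le; auto. intros; split. apply Rabs_pos.
    eapply Rle_trans; [apply snd_le_Cmod|auto]. }
  eapply Rle_trans. apply Cmod_2Rmax. unfold CSeries; simpl.
  assert (sqrt 2 <= 2). { rewrite <- (sqrt_square 2) at 2 by lra. apply sqrt_le_1_alt; lra. }
  assert (Rmax (Rabs (Series (fun k => fst (f k)))) (Rabs (Series (fun k => snd (f k)))) <= Series g) by (apply Rmax_lub; auto).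
  assert (0 <= Rmax (Rabs (Series (fun k => fst (f k)))) (Rabs (Series (fun k => snd (f k))))).
  { eapply Rle_trans; [apply Rabs_pos|apply Rmax_l]. }
  pose proof (sqrt_pos 2). nra.
Qed.

Lemma CSeries_plus f g : ex_series (fun k => fst (f k)) -> ex_series (fun k => snd (f k)) ->
  ex_series (fun k => fst (g k)) -> ex_series (fun k => snd (g k)) ->
  CSeries (fun k => Cplus (f k) (g k)) = Cplus (CSeries f) (CSeries g).
Proof.
  intros. unfold CSeries, Cplus; simpl. f_equal; apply Series_plus; auto.
Qed.
Lemma CSeries_scal c f : ex_series (fun k => fst (f k)) -> ex_series (fun k => snd (f k)) ->
  CSeries (fun k => Cmult c (f k)) = Cmult c (CSeries f).
Proof.
  intros H1 H2. unfold CSeries, Cmult; simpl. f_equal.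
  - rewrite (Series_ext _ (fun k => fst c * fst (f k) - snd c * snd (f k))) by auto.
    rewrite Series_minus, !Series_scal_l; auto. apply (@ex_series_scal_l R_AbsRing R_NormedModule); auto.
    apply (@ex_series_scal_l R_AbsRing R_NormedModule); auto.
  - rewrite (Series_ext _ (fun k => fst c * snd (f k) + snd c * fst (f k))) by auto.
    rewrite Series_plus, !Series_scal_l; auto. apply (@ex_series_scal_l R_AbsRing R_NormedModule); auto.
    apply (@ex_series_scal_l R_AbsRing R_NormedModule); auto.
Qed.
Lemma CSeries_single z j : CSeries (fun k => if Nat.eqb k j then z else RtoC 0) = z.
Proof.
  unfold CSeries. destruct z as [zr zi].
  rewrite (Series_ext _ (fun k => if Nat.eqb k j then zr else 0)).
  rewrite (Series_ext (fun k => snd _) (fun k => if Nat.eqb k j then zi else 0)).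
  rewrite !Series_single; auto.
  intros k0; destruct (Nat.eqb k0 j); auto. intros k0; destruct (Nat.eqb k0 j); auto.
Qed.
Lemma Series_geom_scal G q : Rabs q < 1 -> Series (fun k => G * q ^ k) = G / (1 - q).
Proof. intros. rewrite Series_scal_l, Series_geom; auto. Qed.
Lemma ex_geom_scal G q : Rabs q < 1 -> ex_series (fun k => G * q ^ k).
Proof. intros. apply (@ex_series_scal_l R_AbsRing R_NormedModule G). apply ex_series_geom; auto. Qed.

Lemma iter_adj w n (phi : (nat -> C) -> C) x : Nat.iter n (Fw_adj w) phi x = phi (iterF w n x).
Proof.
  revert x; induction n; intros x; auto. simpl. unfold Fw_adj at 1. rewrite IHn.
  f_equal. unfold iterF. rewrite <- Nat.iter_succ_r. reflexivity.
Qed.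

Lemma prodR_split f m n : prodR f (m + n) = prodR f m * prodR (fun k => f (m + k)%nat) n.
Proof. induction n; simpl. rewrite Nat.add_0_r; ring. rewrite Nat.add_succ_r; simpl. rewrite IHn; ring. Qed.

Fixpoint seqrec (st : nat -> nat -> nat) (Nf : nat -> nat) (k : nat) : nat :=
  match k with O => st O O | S k' => st (seqrec st Nf k' + Nf k')%nat (S k') end.

Lemma CSeries_ext_fun f g : (forall k, f k = g k) -> CSeries f = CSeries (fun k => g k).
Proof. intros H. f_equal. apply functional_extensionality; auto. Qed.
Lemma Cinv_RtoC r : r <> 0 -> RtoC (/ r) = Cinv (RtoC r).
Proof. intros. unfold Cinv, RtoC; simpl. f_equal; field; auto. Qed.

Lemma pow_half_le j k : (j <= k)%nat -> (1/2)^k <= (1/2)^j.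
Proof.
  intros H. replace k with (j + (k - j))%nat by lia. rewrite pow_add.
  assert (forall n, 0 <= (1/2)^n <= 1). { induction n; simpl; [lra|]. nra. }
  destruct (H0 j), (H0 (k - j)%nat). nra.
Qed.

Fixpoint rrec (E : nat -> R) (nfun : nat -> nat) (Cb : R) (k : nat) : R :=
  match k with O => 1 | S k' => rrec E nfun Cb k' * (1/4) ^ (S k') / (1 + E (S k') * Cb ^ (nfun k')) end.

Lemma nf_mono (nf Nf : nat -> nat) : (forall k, (nf k + Nf k <= nf (S k))%nat) ->
  forall j k, (j < k)%nat -> (nf j + Nf j <= nf k)%nat.
Proof. intros H j k Hjk. induction Hjk. auto. specialize (H m). lia. Qed.
Lemma nf_mono' (nf Nf : nat -> nat) : (forall k, (nf k + Nf k <= nf (S k))%nat) ->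
  forall j k, (j <= k)%nat -> (nf j <= nf k)%nat.
Proof. intros H j k Hjk. destruct (Nat.eq_dec j k). subst; auto. pose proof (nf_mono nf Nf H j k ltac:(lia)). lia. Qed.

Section Constr.
Context (p : R) (a b w : nat -> C).
Context (Hp : 1 < p) (Ha : forall n, a n <> RtoC 0) (Hw : forall n, w n <> RtoC 0).
Context (Cb : R) (HCb : 1 <= Cb)
  (HF : forall x, inX p a b x -> inX p a b (Fw w x) /\ normX p a b (Fw w x) <= Cb * normX p a b x).

Definition Wp (m : nat) : R := prodR (fun k => Cmod (w k)) m.
Definition Qf (M : nat) : R := Bnd a b M / Wp M.
Definition Dc (N : nat) (c : nat -> C) : R := rsum (fun m => Cmod (c m) * Cb ^ N * Wp m) N.
Definition preF (n N : nat) (c : nat -> C) (x : nat -> C) : C :=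
  csum (fun m => Cmult (c m) (Cdiv (x (m + n)%nat) (prodC (fun k => w (m + k)%nat) n))) N.

Lemma Wp_pos m : 0 < Wp m.
Proof. unfold Wp. apply prodR_gt0. intros k. apply Cmod_gt_0. auto. Qed.
Lemma Qf_ge0 M : 0 <= Qf M.
Proof. unfold Qf. apply Rdiv_le_0_compat. apply Bnd_ge0. apply Wp_pos. Qed.
Lemma Dc_ge0 N c : 0 <= Dc N c.
Proof.
  unfold Dc. apply rsum_ge0. intros i. pose proof (Cmod_ge_0 (c i)). pose proof (pow_le Cb N ltac:(lra)).
  pose proof (Wp_pos i). apply Rmult_le_pos; [apply Rmult_le_pos|]; lra.
Qed.
Lemma prodCw_neq0 m n : prodC (fun k => w (m + k)%nat) n <> RtoC 0.
Proof.
  intro E. assert (Cmod (prodC (fun k => w (m + k)%nat) n) = 0) by (rewrite E; apply Cmod_0).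
  rewrite Cmod_prodC in H. pose proof (prodR_gt0 (fun k => Cmod (w (m + k)%nat)) n). 
  assert (0 < prodR (fun k => Cmod (w (m + k)%nat)) n) by (apply H0; intros; apply Cmod_gt_0; auto). lra.
Qed.

Lemma preF_inv n N c x : preF n N c (iterF w n x) = fc N c x.
Proof.
  unfold preF, fc. apply csum_ext. intros m _. rewrite iterF_high. field. apply prodCw_neq0.
Qed.
Lemma preF_zero n N c n' x : (n + N <= n')%nat -> preF n N c (iterF w n' x) = RtoC 0.
Proof.
  intros H. unfold preF. transitivity (csum (fun _ => RtoC 0) N).
  apply csum_ext. intros m Hm. rewrite iterF_low by lia. unfold Cdiv; ring.
  clear. induction N; simpl; auto. rewrite IHN; ring.
Qed.
Lemma preF_add n N c x y : preF n N c (fun k => Cplus (x k) (y k)) = Cplus (preF n N c x) (preF n N c y).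
Proof. unfold preF. rewrite <- csum_plus. apply csum_ext; intros. unfold Cdiv; ring. Qed.
Lemma preF_scal n N c z x : preF n N c (fun k => Cmult z (x k)) = Cmult z (preF n N c x).
Proof. unfold preF. rewrite <- csum_scal. apply csum_ext; intros. unfold Cdiv; ring. Qed.

Lemma iterB : forall n x, inX p a b x -> inX p a b (iterF w n x) /\ normX p a b (iterF w n x) <= Cb ^ n * normX p a b x.
Proof. apply (iter_bound p a b w Cb HCb HF). Qed.

Lemma coord_shift x i j : inX p a b x ->
  Cmod (x i) * prodR (fun l => Cmod (w (i + l)%nat)) j <= Bnd a b (i + j) * (Cb ^ j * normX p a b x).
Proof.
  intros Hx. destruct (iterB j x Hx) as [H1 H2].
  pose proof (coord_bound p a b Hp Ha (iterF w j x) (i + j) H1). rewrite iterF_high in H.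
  rewrite Cmod_mult, Cmod_prodC in H. rewrite Rmult_comm. eapply Rle_trans. apply H.
  apply Rmult_le_compat_l. apply Bnd_ge0. auto.
Qed.

Lemma preF_bound n N c x : inX p a b x -> Cmod (preF n N c x) <= Dc N c * Qf (n + N) * normX p a b x.
Proof.
  intros Hx. unfold preF, Dc. eapply Rle_trans. apply Cmod_csum.
  rewrite Rmult_assoc, Rmult_comm, <- rsum_scal. apply rsum_le. intros m Hm.
  rewrite Cmod_mult, Cmod_div by apply prodCw_neq0. rewrite Cmod_prodC.
  set (j := (N - m)%nat).
  set (A := prodR (fun k => Cmod (w (m + k)%nat)) n).
  set (B := prodR (fun l => Cmod (w (m + n + l)%nat)) j).
  pose proof (coord_shift x (m + n) j Hx) as Hs. fold B in Hs.
  assert (Ej : (m + n + j = n + N)%nat) by (unfold j; lia). rewrite Ej in Hs.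
  assert (HA : 0 < A) by (apply prodR_gt0; intros; apply Cmod_gt_0; auto).
  assert (HB : 0 < B) by (apply prodR_gt0; intros; apply Cmod_gt_0; auto).
  assert (EW : Wp (n + N) = Wp m * (A * B)).
  { unfold Wp. rewrite <- Ej. rewrite <- Nat.add_assoc, prodR_split. f_equal.
    rewrite prodR_split. unfold A, B. replace (fun l => Cmod (w (m + n + l)%nat)) with (fun k => Cmod (w (m + (n + k))%nat)). reflexivity. apply functional_extensionality; intros; rewrite Nat.add_assoc; auto. }
  pose proof (Wp_pos m). pose proof (normX_ge0 p a b x). pose proof (Bnd_ge0 a b (n + N)).
  assert (Cb ^ j <= Cb ^ N) by (apply Rle_pow; auto; unfold j; lia).
  pose proof (pow_le Cb j ltac:(lra)). pose proof (Cmod_ge_0 (c m)). pose proof (Cmod_ge_0 (x (m + n)%nat)).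
  unfold Qf. rewrite EW.
  assert (Cmod (x (m + n)%nat) / A <= Bnd a b (n + N) * (Cb ^ N * normX p a b x) / (A * B)).
  { apply Rmult_le_reg_r with (A * B). nra. unfold Rdiv. rewrite Rmult_assoc, (Rmult_assoc _ (/ (A * B))), Rinv_l by nra.
    rewrite Rmult_1_r. replace (Cmod (x (m + n)%nat) * (/ A * (A * B))) with (Cmod (x (m + n)%nat) * B) by (field; lra).
    eapply Rle_trans. apply Hs. apply Rmult_le_compat_l. auto. apply Rmult_le_compat_r; auto. }
  apply Rle_trans with (Cmod (c m) * (Bnd a b (n + N) * (Cb ^ N * normX p a b x) / (A * B))).
  apply Rmult_le_compat_l; auto. right. field. nra.
Qed.
Lemma construct (Nf : nat -> nat) (cf : nat -> nat -> C) (nf : nat -> nat) (rf : nat -> R)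
  (H1 : forall k, (nf k + Nf k <= nf (S k))%nat) (H2 : forall k, 0 < rf k)
  (H3 : forall j k, (j < k)%nat -> rf k * (Dc (Nf k) (cf k) * Qf (nf k + Nf k)) * Cb ^ (nf j) <= rf j * (1/4) ^ k) :
  exists phi, in_dual p a b phi /\ forall j x, inX p a b x ->
    Cmod (Cminus (Cmult (RtoC (/ rf j)) (phi (iterF w (nf j) x))) (fc (Nf j) (cf j) x)) <= 4 * (1/2) ^ j * normX p a b x.
Proof.
  set (v := fun k x => Cmult (RtoC (rf k)) (preF (nf k) (Nf k) (cf k) x)).
  set (beta := fun k => rf k * (Dc (Nf k) (cf k) * Qf (nf k + Nf k))).
  assert (Hb0 : forall k, 0 <= beta k).
  { intros k. unfold beta. pose proof (H2 k). pose proof (Dc_ge0 (Nf k) (cf k)).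
    pose proof (Qf_ge0 (nf k + Nf k)). apply Rmult_le_pos. lra. apply Rmult_le_pos; auto. }
  assert (Hv : forall k x, inX p a b x -> Cmod (v k x) <= beta k * normX p a b x).
  { intros k x Hx. unfold v, beta. rewrite Cmod_mult, Cmod_RtoC_pos by (apply Rlt_le, H2).
    pose proof (preF_bound (nf k) (Nf k) (cf k) x Hx). pose proof (H2 k). 
    rewrite Rmult_assoc. apply Rmult_le_compat_l; lra. }
  set (G := beta O + rf O).
  assert (HbG : forall k, beta k <= G * (1/4) ^ k).
  { intros [|k]. simpl. unfold G. pose proof (H2 O); lra.
    pose proof (H3 O (S k) ltac:(lia)). fold (beta (S k)) in H. pose proof (pow_R1_Rle Cb (nf O) HCb).
    pose proof (Hb0 (S k)). pose proof (Hb0 O). pose proof (pow_le (1/4) (S k) ltac:(lra)).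
    unfold G. nra. }
  assert (Hq4 : Rabs (1/4) < 1) by (rewrite Rabs_pos_eq; lra).
  assert (Hq2 : Rabs (1/2) < 1) by (rewrite Rabs_pos_eq; lra).
  assert (Hvb : forall x, inX p a b x -> forall k, Cmod (v k x) <= (G * normX p a b x) * (1/4) ^ k).
  { intros x Hx k. eapply Rle_trans. apply Hv; auto. pose proof (normX_ge0 p a b x). pose proof (HbG k). nra. }
  set (phi := fun x => CSeries (fun k => v k x)).
  exists phi. split.
  - split; [|split].
    + intros x y Hx Hy. unfold phi.
      destruct (CSeries_bound (fun k => v k x) _ (Hvb x Hx) (ex_geom_scal _ _ Hq4)) as [E1 [E2 _]].
      destruct (CSeries_bound (fun k => v k y) _ (Hvb y Hy) (ex_geom_scal _ _ Hq4)) as [E3 [E4 _]].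
      rewrite <- CSeries_plus by auto. f_equal. apply functional_extensionality; intros k.
      unfold v. rewrite preF_add. ring.
    + intros c x Hx. unfold phi.
      destruct (CSeries_bound (fun k => v k x) _ (Hvb x Hx) (ex_geom_scal _ _ Hq4)) as [E1 [E2 _]].
      rewrite <- CSeries_scal by auto. f_equal. apply functional_extensionality; intros k.
      unfold v. rewrite preF_scal. ring.
    + exists (2 * (G / (1 - 1/4))). intros x Hx. unfold phi.
      destruct (CSeries_bound (fun k => v k x) _ (Hvb x Hx) (ex_geom_scal _ _ Hq4)) as [_ [_ E]].
      rewrite Series_geom_scal in E by auto. replace (2 * (G / (1 - 1 / 4)) * normX p a b x) with (2 * (G * normX p a b x / (1 - 1/4))) by (field; lra). auto.
  - intros j x Hx. set (y := iterF w (nf j) x).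
    destruct (iterB (nf j) x Hx) as [Hy Hny]. fold y in Hy, Hny.
    set (h' := fun k => if Nat.leb k j then RtoC 0 else v k y).
    set (tj := fc (Nf j) (cf j) x).
    assert (Eh : forall k, v k y = Cplus (if Nat.eqb k j then Cmult (RtoC (rf j)) tj else RtoC 0) (h' k)).
    { intros k. unfold h'. destruct (Nat.eqb_spec k j).
      - subst k. rewrite Nat.leb_refl. unfold v, y. rewrite preF_inv by auto. fold tj. ring.
      - destruct (Nat.leb_spec k j).
        + assert (k < j)%nat by lia. unfold v, y. rewrite preF_zero by (auto; apply (nf_mono nf Nf H1); auto). ring.
        + ring. }
    set (R0 := rf j * (1/2) ^ j * normX p a b x).
    assert (Hh' : forall k, Cmod (h' k) <= R0 * (1/2) ^ k).
    { intros k. unfold h'. pose proof (normX_ge0 p a b x). pose proof (H2 j).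
      assert (0 <= R0) by (unfold R0; pose proof (pow_le (1/2) j ltac:(lra)); apply Rmult_le_pos; [apply Rmult_le_pos|]; lra).
      destruct (Nat.leb_spec k j) as [Hkj|Hkj]. rewrite Cmod_0. pose proof (pow_le (1/2) k ltac:(lra)). nra.
      eapply Rle_trans. apply Hv; auto. pose proof (H3 j k Hkj) as H5. fold (beta k) in H5.
      assert ((1/4) ^ k <= (1/2) ^ j * (1/2) ^ k).
      { replace (1/4) with ((1/2) * (1/2)) by field. rewrite Rpow_mult_distr. apply Rmult_le_compat_r.
        apply pow_le; lra. apply pow_half_le; lia. }
      pose proof (Hb0 k). pose proof (pow_le Cb (nf j) ltac:(lra)).
      apply Rle_trans with (beta k * (Cb ^ nf j * normX p a b x)). apply Rmult_le_compat_l; auto.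
      apply Rle_trans with (rf j * (1/4)^k * normX p a b x).
      rewrite <- Rmult_assoc. apply Rmult_le_compat_r; auto.
      unfold R0. replace (rf j * (1/2)^j * normX p a b x * (1/2)^k) with (rf j * ((1/2)^j * (1/2)^k) * normX p a b x) by ring.
      apply Rmult_le_compat_r; auto. apply Rmult_le_compat_l; lra. }
    destruct (CSeries_bound h' _ Hh' (ex_geom_scal _ _ Hq2)) as [E1 [E2 E3]].
    rewrite Series_geom_scal in E3 by auto.
    assert (Ephi : phi y = Cplus (Cmult (RtoC (rf j)) tj) (CSeries h')).
    { unfold phi. rewrite (CSeries_ext_fun (fun k => v k y) _ Eh). rewrite CSeries_plus; auto.
      rewrite CSeries_single. auto.
      apply ex_series_fin with (S j). intros n Hn. destruct (Nat.eqb_spec n j); [lia|auto].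
      apply ex_series_fin with (S j). intros n Hn. destruct (Nat.eqb_spec n j); [lia|auto]. }
    fold y. rewrite Ephi.
    replace (Cminus (Cmult (RtoC (/ rf j)) (Cplus (Cmult (RtoC (rf j)) tj) (CSeries h'))) tj)
      with (Cmult (RtoC (/ rf j)) (CSeries h')).
    2:{ pose proof (H2 j). assert (RtoC (rf j) <> RtoC 0) by (intro E; injection E; lra).
        rewrite (Cinv_RtoC (rf j)) by lra. field; auto. }
    rewrite Cmod_mult, Cmod_RtoC_pos by (apply Rlt_le, Rinv_0_lt_compat, H2).
    pose proof (H2 j). apply Rle_trans with (/ rf j * (2 * (R0 / (1 - 1/2)))).
    apply Rmult_le_compat_l; auto. left; apply Rinv_0_lt_compat; auto.
    right. unfold R0. field. lra.
Qed.

Lemma close_helper phi (nf : nat -> nat) (rf : nat -> R) :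
  (forall j x, inX p a b x -> Cmod (Cminus (Cmult (RtoC (/ rf j)) (phi (iterF w (nf j) x))) (fc (TN j) (tcoef j) x)) <= 4 * (1/2) ^ j * normX p a b x) ->
  forall psi, in_dual p a b psi -> forall eps, 0 < eps -> exists j,
    dual_close p a b (fun x => Cmult (RtoC (/ rf j)) (Nat.iter (nf j) (Fw_adj w) phi x)) psi eps.
Proof.
  intros Hphi psi Hpsi eps He.
  destruct (pow_lt_1_zero (1/2) ltac:(rewrite Rabs_pos_eq; lra) (eps / 16) ltac:(lra)) as [J HJ].
  destruct (target_dense p a b Hp Ha psi (eps / 4) Hpsi ltac:(lra) J) as [j [Hj Ht]].
  exists j. exists (eps / 2). split. lra. intros x Hx.
  rewrite iter_adj. specialize (HJ j Hj). rewrite Rabs_pos_eq in HJ by (apply pow_le; lra).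
  specialize (Ht x Hx). specialize (Hphi j x Hx). unfold tgt in Ht.
  replace (Cminus (Cmult (RtoC (/ rf j)) (phi (iterF w (nf j) x))) (psi x)) with
    (Cplus (Cminus (Cmult (RtoC (/ rf j)) (phi (iterF w (nf j) x))) (fc (TN j) (tcoef j) x))
           (Copp (Cminus (psi x) (fc (TN j) (tcoef j) x)))) by ring.
  eapply Rle_trans. apply Cmod_triangle. rewrite Cmod_opp. pose proof (normX_ge0 p a b x). nra.
Qed.

Lemma hyper_of_Q : (forall eps, 0 < eps -> forall L, exists M, (L <= M)%nat /\ Qf M < eps) -> adj_hypercyclic p a b w.
Proof.
  intros HQ.
  assert (step : forall s k, exists n, (s <= n)%nat /\ Dc (TN k) (tcoef k) * Qf (n + TN k) * Cb ^ s <= (1/4) ^ k).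
  { intros s k. set (D := Dc (TN k) (tcoef k)). pose proof (Dc_ge0 (TN k) (tcoef k)). fold D in H.
    pose proof (pow_R1_Rle Cb s HCb). pose proof (pow_lt (1/4) k ltac:(lra)).
    destruct (HQ ((1/4) ^ k / ((D + 1) * Cb ^ s)) ltac:(apply Rdiv_lt_0_compat; nra) (s + TN k)%nat) as [M [HM1 HM2]].
    exists (M - TN k)%nat. split. lia. replace (M - TN k + TN k)%nat with M by lia.
    pose proof (Qf_ge0 M).
    apply Rle_trans with ((D + 1) * Qf M * Cb ^ s). apply Rmult_le_compat_r. lra. apply Rmult_le_compat_r; lra.
    apply Rmult_lt_compat_l with (r := (D + 1) * Cb ^ s) in HM2. 2: nra.
    replace ((D + 1) * Cb ^ s * ((1 / 4) ^ k / ((D + 1) * Cb ^ s))) with ((1/4)^k) in HM2 by (field; nra). nra. }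
  set (st := fun s k => proj1_sig (constructive_indefinite_description _ (step s k))).
  assert (Hst : forall s k, (s <= st s k)%nat /\ Dc (TN k) (tcoef k) * Qf (st s k + TN k) * Cb ^ s <= (1/4) ^ k).
  { intros s k. unfold st. destruct (constructive_indefinite_description _ (step s k)); auto. }
  set (nf := seqrec st TN).
  assert (H1 : forall k, (nf k + TN k <= nf (S k))%nat).
  { intros k. unfold nf. simpl. apply Hst. }
  destruct (construct TN tcoef nf (fun _ => 1) H1 ltac:(intros; lra)) as [phi [Hphi Horb]].
  { intros j k Hjk. destruct k as [|k']. lia.
    change (nf (S k')) with (st (nf k' + TN k')%nat (S k')).
    destruct (Hst (nf k' + TN k')%nat (S k')) as [_ Hs].
    assert (Cb ^ nf j <= Cb ^ (nf k' + TN k')).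
    { apply Rle_pow; auto. pose proof (nf_mono' nf TN H1 j k' ltac:(lia)). lia. }
    pose proof (Dc_ge0 (TN (S k')) (tcoef (S k'))). pose proof (Qf_ge0 (st (nf k' + TN k')%nat (S k') + TN (S k'))).
    assert (0 <= Dc (TN (S k')) (tcoef (S k')) * Qf (st (nf k' + TN k')%nat (S k') + TN (S k'))) by (apply Rmult_le_pos; auto).
    rewrite !Rmult_1_l. eapply Rle_trans; [|apply Hs]. apply Rmult_le_compat_l; auto. }
  exists phi. split; auto. intros psi Hpsi eps He.
  destruct (close_helper phi nf (fun _ => 1) Horb psi Hpsi eps He) as [j Hj].
  exists (nf j). replace (Nat.iter (nf j) (Fw_adj w) phi) with (fun x => Cmult (RtoC (/ 1)) (Nat.iter (nf j) (Fw_adj w) phi x)); auto.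
  apply functional_extensionality; intros x. rewrite Rinv_1. ring.
Qed.

Lemma super_all : adj_supercyclic p a b w.
Proof.
  set (nf := seqrec (fun s _ => s) TN).
  assert (H1 : forall k, (nf k + TN k <= nf (S k))%nat) by (intros; unfold nf; simpl; lia).
  set (E := fun k => Dc (TN k) (tcoef k) * Qf (nf k + TN k)).
  assert (HE : forall k, 0 <= E k) by (intros; unfold E; apply Rmult_le_pos; [apply Dc_ge0|apply Qf_ge0]).
  set (rf := rrec E nf Cb).
  assert (Hpow : forall n, 1 <= Cb ^ n) by (intros; apply pow_R1_Rle; auto).
  assert (H2 : forall k, 0 < rf k).
  { induction k. unfold rf; simpl; lra. change (rf (S k)) with (rf k * (1/4) ^ (S k) / (1 + E (S k) * Cb ^ (nf k))).
    pose proof (HE (S k)). pose proof (Hpow (nf k)).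
    apply Rdiv_lt_0_compat. apply Rmult_lt_0_compat; auto. apply pow_lt; lra. nra. }
  assert (Hdec : forall k, rf (S k) <= rf k).
  { intros k. change (rf (S k)) with (rf k * (1/4) ^ (S k) / (1 + E (S k) * Cb ^ (nf k))).
    pose proof (HE (S k)). pose proof (Hpow (nf k)). pose proof (H2 k).
    assert ((1/4) ^ (S k) <= 1). { clear. induction k; simpl in *; nra. }
    pose proof (pow_le (1/4) (S k) ltac:(lra)).
    assert (0 <= E (S k) * Cb ^ nf k) by nra.
    apply Rmult_le_reg_r with (1 + E (S k) * Cb ^ nf k). nra. unfold Rdiv. rewrite Rmult_assoc, Rinv_l by nra.
    rewrite Rmult_1_r. assert (rf k * (1/4)^(S k) <= rf k) by nra. nra. }
  assert (Hdec' : forall j k, (j <= k)%nat -> rf k <= rf j).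
  { intros j k H. induction H. lra. pose proof (Hdec m). lra. }
  destruct (construct TN tcoef nf rf H1 H2) as [phi [Hphi Horb]].
  { intros j k Hjk. destruct k as [|k']. lia. fold (E (S k')).
    change (rf (S k')) with (rf k' * (1/4) ^ (S k') / (1 + E (S k') * Cb ^ (nf k'))).
    pose proof (HE (S k')). pose proof (Hpow (nf k')). pose proof (H2 k'). pose proof (Hdec' j k' ltac:(lia)).
    assert (Cb ^ nf j <= Cb ^ nf k') by (apply Rle_pow; auto; apply (nf_mono' nf TN H1); lia).
    pose proof (pow_le (1/4) (S k') ltac:(lra)).
    assert (E (S k') * Cb ^ nf j / (1 + E (S k') * Cb ^ nf k') <= 1).
    { apply Rmult_le_reg_r with (1 + E (S k') * Cb ^ nf k'). nra. unfold Rdiv. rewrite Rmult_assoc, Rinv_l by nra. nra. }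
    apply Rle_trans with (rf k' * (1/4) ^ (S k') * (E (S k') * Cb ^ nf j / (1 + E (S k') * Cb ^ nf k'))).
    right. field. nra.
    apply Rle_trans with (rf k' * (1/4) ^ (S k')). rewrite <- (Rmult_1_r (rf k' * (1/4) ^ (S k'))) at 2.
    apply Rmult_le_compat_l; auto. nra. nra. }
  exists phi. split; auto. intros psi Hpsi eps He.
  destruct (close_helper phi nf rf Horb psi Hpsi eps He) as [j Hj].
  exists (RtoC (/ rf j)), (nf j). auto.
Qed.
End Constr.


Definition tt (p : R) (a b : nat -> C) (m j : nat) : R :=
  rpowp (Cmod (prodC (fun k => Cdiv (b (m + k)%nat) (a (m + k + 1)%nat)) j)) p.

Lemma rsum_term f L n : (forall i, 0 <= f i) -> (n < L)%nat -> f n <= rsum f L.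
Proof.
  intros H Hn. induction L. lia. simpl. destruct (Nat.eq_dec n L). subst. pose proof (rsum_ge0 f L H). lra.
  pose proof (IHL ltac:(lia)). specialize (H L). lra.
Qed.

Lemma rpowp_pow x j q : 0 <= x -> rpowp (x ^ j) q = rpowp x q ^ j.
Proof.
  intros Hx. induction j. simpl. apply rpowp_1. simpl. rewrite rpowp_mult, IHj; auto. apply pow_le; auto.
Qed.

Section J.
Context (p : R) (a b w : nat -> C).
Context (Hp : 1 < p) (Ha : forall n, a n <> RtoC 0) (Hw : forall n, w n <> RtoC 0).
Context (Cb : R) (HCb : 1 <= Cb)
  (HF : forall x, inX p a b x -> inX p a b (Fw w x) /\ normX p a b (Fw w x) <= Cb * normX p a b x).

Lemma unbounded : adj_hypercyclic p a b w -> forall x nu, inX p a b x -> x nu <> RtoC 0 ->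
  forall K L, exists n, (L <= n)%nat /\ K < normX p a b (iterF w n x).
Proof.
  intros [phi [Hphi Hd]] x nu Hx Hnu K L. destruct Hphi as [_ [_ [Cp HCp]]].
  set (S := rsum (fun n => normX p a b (iterF w n x)) L).
  assert (HS : 0 <= S) by (apply rsum_ge0; intros; apply normX_ge0).
  set (K' := Rabs K + S).
  set (T := normX p a b x + (Rabs Cp + 1) * (K' + 1)).
  set (c := Cdiv (RtoC T) (x nu)).
  set (psi := fun y : nat -> C => Cmult c (y nu)).
  assert (Hpsi : in_dual p a b psi).
  { split; [|split]. intros; unfold psi; ring. intros; unfold psi; ring.
    exists (Cmod c * Bnd a b nu). intros y Hy. unfold psi. rewrite Cmod_mult, Rmult_assoc.
    apply Rmult_le_compat_l. apply Cmod_ge_0. apply coord_bound; auto. }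
  destruct (Hd psi Hpsi 1 ltac:(lra)) as [n [delta [Hdl Hclose]]].
  specialize (Hclose x Hx). rewrite iter_adj in Hclose.
  assert (Epsi : psi x = RtoC T) by (unfold psi, c; field; auto). rewrite Epsi in Hclose.
  destruct (iterB p a b w Cb HCb HF n x Hx) as [Hn _].
  pose proof (HCp _ Hn) as Hup. pose proof (normX_ge0 p a b x) as Hnx.
  pose proof (normX_ge0 p a b (iterF w n x)) as Hnn.
  assert (Cmod (RtoC T) <= Cmod (phi (iterF w n x)) + normX p a b x).
  { replace (RtoC T) with (Cplus (phi (iterF w n x)) (Copp (Cminus (phi (iterF w n x)) (RtoC T)))) by ring.
    eapply Rle_trans. apply Cmod_triangle. rewrite Cmod_opp. nra. }
  assert (HT : 0 <= T) by (unfold T, K'; pose proof (Rabs_pos Cp); pose proof (Rabs_pos K); nra).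
  rewrite Cmod_RtoC_pos in H by auto.
  assert (HK' : K' < normX p a b (iterF w n x)).
  { apply Rnot_le_lt. intro Hle. pose proof (Rle_abs Cp). pose proof (Rabs_pos Cp).
    assert (Cp * normX p a b (iterF w n x) <= Rabs Cp * K') by nra. unfold T in H. nra. }
  exists n. split.
  - destruct (Nat.lt_ge_cases n L); auto. exfalso.
    pose proof (rsum_term (fun n => normX p a b (iterF w n x)) L n ltac:(intros; apply normX_ge0) H0).
    fold S in H1. unfold K' in HK'. pose proof (Rabs_pos K). lra.
  - unfold K' in HK'. pose proof (Rle_abs K). lra.
Qed.

Lemma iter_unit nu n : iterF w n (unitC nu) = fun i => Cmult (prodC (fun k => w (nu + k)%nat) n) (unitC (nu + n) i).
Proof.
  apply functional_extensionality; intros i. destruct (Nat.lt_ge_cases i n).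
  - rewrite iterF_low by auto. unfold unitC. destruct (Nat.eqb_spec i (nu + n)); [lia|ring].
  - replace i with (i - n + n)%nat by lia. rewrite iterF_high. unfold unitC.
    destruct (Nat.eqb_spec (i - n) nu), (Nat.eqb_spec (i - n + n) (nu + n)); try lia.
    subst nu. ring. ring.
Qed.

Lemma coefinv_unit_low c m i : (i < m)%nat -> coefinv a b (fun k => Cmult c (unitC m k)) i = RtoC 0.
Proof.
  induction i; intros H; simpl.
  - unfold unitC. destruct (Nat.eqb_spec 0 m); [lia|]. field; auto.
  - rewrite IHi by lia. unfold unitC. destruct (Nat.eqb_spec (S i) m); [lia|]. field; auto.
Qed.
Lemma coefinv_unit c m j : coefinv a b (fun k => Cmult c (unitC m k)) (m + j)%nat =
  Cmult (Cdiv c (a m)) (prodC (fun k => Copp (Cdiv (b (m + k)%nat) (a (m + k + 1)%nat))) j).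
Proof.
  induction j.
  - rewrite Nat.add_0_r. destruct m; simpl. unfold unitC; simpl. field; auto.
    rewrite coefinv_unit_low by lia. unfold unitC. rewrite Nat.eqb_refl. field; auto.
  - replace (m + S j)%nat with (S (m + j)) by lia. simpl. rewrite IHj. unfold unitC.
    destruct (Nat.eqb_spec (S (m + j)) m); [lia|]. replace (m + j + 1)%nat with (S (m + j)) by lia. field; auto.
Qed.

Lemma lp_unit c m : c <> RtoC 0 ->
  (inX p a b (fun k => Cmult c (unitC m k)) <-> ex_series (fun j => tt p a b m (S j))) /\
  (ex_series (fun j => tt p a b m (S j)) ->
    normX p a b (fun k => Cmult c (unitC m k)) = Cmod (Cdiv c (a m)) * rpowp (1 + Series (fun j => tt p a b m (S j))) (/ p)).
Proof.
  intros Hc. set (x := fun k => Cmult c (unitC m k)).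
  set (f := fun i => rpowp (Cmod (coefinv a b x i)) p).
  set (A := rpowp (Cmod (Cdiv c (a m))) p).
  assert (HA : 0 < A). { apply rpowp_gt0. rewrite Cmod_div by auto. apply Rdiv_lt_0_compat; apply Cmod_gt_0; auto. }
  assert (Ef : forall j, f (m + j)%nat = A * tt p a b m j).
  { intros j. unfold f, x. rewrite coefinv_unit. rewrite Cmod_mult, rpowp_mult by apply Cmod_ge_0. fold A. f_equal.
    unfold tt. rewrite !Cmod_prodC. f_equal. f_equal. apply functional_extensionality; intros k. apply Cmod_opp. }
  assert (Et0 : tt p a b m 0 = 1) by (unfold tt; change (prodC _ 0) with (RtoC 1); rewrite Cmod_R, Rabs_R1; apply rpowp_1).
  assert (Eser : ex_series f <-> ex_series (fun j => tt p a b m (S j))).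
  { rewrite (ex_series_incr_n f m). split; intros H.
    - apply (ex_series_ext _ _ Ef) in H. apply (proj1 (ex_series_incr_1 (tt p a b m))). eapply ex_series_ext. 2: apply (@ex_series_scal_l R_AbsRing R_NormedModule (/ A) _ H).
      intros n. cbv beta. change (scal (/ A) (A * tt p a b m n)) with (/ A * (A * tt p a b m n)). rewrite <- Rmult_assoc, Rinv_l, Rmult_1_l; lra.
    - apply (proj2 (ex_series_incr_1 (tt p a b m))) in H. apply (ex_series_ext (fun j => A * tt p a b m j)). intros; symmetry; apply Ef.
      apply (@ex_series_scal_l R_AbsRing R_NormedModule A _ H). }
  assert (Hinx : inX p a b x <-> ex_series f).
  { split. intros Hx. apply (inX_lam p a b Ha x Hx).
    intros H. exists (coefinv a b x). split. exact H.
    intros k. destruct k. simpl. field; auto. simpl. field; auto. }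
  split. rewrite Hinx; auto.
  intros Hs. apply Eser in Hs as Hf. unfold normX, lpnorm. fold f.
  assert (Series f = A * (1 + Series (fun j => tt p a b m (S j)))).
  { rewrite (Series_incr_n_aux f m). rewrite (Series_ext _ _ Ef). rewrite Series_scal_l.
    rewrite Series_incr_1. rewrite Et0. auto. apply ex_series_incr_1; auto.
    intros k Hk. unfold f, x. rewrite coefinv_unit_low by auto. rewrite Cmod_0. apply rpowp_0. }
  rewrite H. assert (0 <= Series (fun j => tt p a b m (S j))).
  { apply Series_ge0; auto. intros; apply rpowp_ge0. }
  rewrite rpowp_mult by lra. unfold A. rewrite rpowp_inv by (auto using Cmod_ge_0; lra). auto.
Qed.
End J.

Lemma limsup_bound (r : nat -> R) : Rbar_lt (LimSup_seq r) (Finite 1) ->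
  exists rho N0, 0 < rho < 1 /\ forall n, (N0 <= n)%nat -> r n <= rho.
Proof.
  intros Hlt. assert (Hl : is_LimSup_seq r (LimSup_seq r)) by (unfold LimSup_seq; apply proj2_sig).
  destruct (LimSup_seq r) as [l| |]; simpl in Hlt; try tauto.
  - assert (He : 0 < (1 - l) / 2) by lra. destruct (Hl (mkposreal _ He)) as [_ [N0 HN]].
    exists (Rmax ((1 + l) / 2) (1/2)), N0. split. split. eapply Rlt_le_trans; [|apply Rmax_r]; lra.
    apply Rmax_lub_lt; lra. intros n Hn. specialize (HN n Hn). simpl in HN. eapply Rle_trans; [|apply Rmax_l]. lra.
  - destruct (Hl (1/2)) as [N0 HN]. exists (1/2), N0. split. lra. intros n Hn. specialize (HN n Hn). lra.
Qed.

Lemma theta_lt1 rho q : 0 < rho < 1 -> 0 < q -> rpowp rho q < 1.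
Proof.
  intros Hr Hq. rewrite rpowp_pos by lra. unfold Rpower. rewrite <- exp_0. apply exp_increasing.
  assert (ln rho < ln 1) by (apply ln_increasing; lra). rewrite ln_1 in H. nra.
Qed.

Section K.
Context (p : R) (a b : nat -> C).
Context (Hp : 1 < p) (Ha : forall n, a n <> RtoC 0).

Definition rr (n : nat) : R := Cmod (Cdiv (b n) (a (S n))).

Lemma rr_bound rho N0 : 0 < rho < 1 -> (forall n, (N0 <= n)%nat -> rr n <= rho) ->
  forall n, rr n <= 1 + rsum rr N0.
Proof.
  intros Hr HN n. assert (forall i, 0 <= rr i) by (intros; apply Cmod_ge_0).
  pose proof (rsum_ge0 rr N0 H).
  destruct (Nat.lt_ge_cases n N0). pose proof (rsum_term rr N0 n H H1). lra. specialize (HN n H1). lra.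
Qed.

Lemma prod_bound rho N0 : 0 < rho < 1 -> (forall n, (N0 <= n)%nat -> rr n <= rho) ->
  forall m j, prodR (fun k => rr (m + k)%nat) j <= ((1 + rsum rr N0) / rho) ^ N0 * rho ^ j.
Proof.
  intros Hr HN m j. set (R0 := 1 + rsum rr N0). set (q := R0 / rho).
  assert (Hpos : forall i, 0 <= rr i) by (intros; apply Cmod_ge_0).
  assert (HR0 : 1 <= R0) by (unfold R0; pose proof (rsum_ge0 rr N0 Hpos); lra).
  assert (Hq : 1 <= q) by (unfold q; apply Rmult_le_reg_r with rho; [lra|]; unfold Rdiv; rewrite Rmult_assoc, Rinv_l; lra).
  assert (Hgen : forall j, prodR (fun k => rr (m + k)%nat) j <= q ^ (Nat.min j (N0 - m)) * rho ^ j).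
  { induction j0. simpl; lra.
    change (prodR (fun k => rr (m + k)%nat) (S j0)) with (prodR (fun k => rr (m + k)%nat) j0 * rr (m + j0)%nat).
    pose proof (prodR_ge0 (fun k => rr (m + k)%nat) j0 (fun k => Hpos _)).
    pose proof (pow_le q (Nat.min j0 (N0 - m)) ltac:(lra)). pose proof (pow_le rho j0 ltac:(lra)).
    destruct (Nat.lt_ge_cases (m + j0) N0).
    - replace (Nat.min (S j0) (N0 - m)) with (S (Nat.min j0 (N0 - m))) by lia.
      pose proof (rr_bound rho N0 Hr HN (m + j0)). fold R0 in H3.
      assert (rr (m + j0)%nat <= q * rho) by (replace (q * rho) with R0 by (unfold q; field; lra); lra).
      apply Rle_trans with (q ^ Nat.min j0 (N0 - m) * rho ^ j0 * (q * rho)). apply Rmult_le_compat; auto; try apply Hpos. right; simpl; ring.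
    - replace (Nat.min (S j0) (N0 - m)) with (Nat.min j0 (N0 - m)) by lia.
      pose proof (HN (m + j0)%nat H2).
      apply Rle_trans with (q ^ Nat.min j0 (N0 - m) * rho ^ j0 * rho). apply Rmult_le_compat; auto; try apply Hpos. right; simpl; ring. }
  eapply Rle_trans. apply Hgen. apply Rmult_le_compat_r. apply pow_le; lra. apply Rle_pow; auto. lia.
Qed.

Lemma tt_unif rho N0 : 0 < rho < 1 -> (forall n, (N0 <= n)%nat -> rr n <= rho) ->
  exists U, forall m, ex_series (fun j => tt p a b m (S j)) /\ Series (fun j => tt p a b m (S j)) <= U.
Proof.
  intros Hr HN. set (K0 := ((1 + rsum rr N0) / rho) ^ N0).
  assert (HK0 : 0 <= K0).
  { unfold K0. apply pow_le. apply Rdiv_le_0_compat; [|lra]. pose proof (rsum_ge0 rr N0 (fun i => Cmod_ge_0 _)); lra. }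
  set (Q0 := rpowp K0 p). set (th := rpowp rho p).
  assert (Hth : th < 1) by (apply theta_lt1; lra). assert (Hth0 : 0 <= th) by apply rpowp_ge0.
  assert (Hb : forall m j, 0 <= tt p a b m (S j) <= Q0 * th ^ j).
  { intros m j. split. apply rpowp_ge0. unfold tt. rewrite Cmod_prodC.
    replace (fun k => Cmod (Cdiv (b (m + k)%nat) (a (m + k + 1)%nat))) with (fun k => rr (m + k)%nat).
    2:{ apply functional_extensionality; intros k. unfold rr. rewrite Nat.add_1_r. auto. }
    eapply Rle_trans. apply rpowp_le. lra. split. apply prodR_ge0; intros; apply Cmod_ge_0.
    apply (prod_bound rho N0 Hr HN m (S j)).
    fold K0. rewrite rpowp_mult, rpowp_pow by (first [lra | apply pow_le; lra]). fold Q0 th.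
    simpl. assert (0 <= Q0) by apply rpowp_ge0. pose proof (pow_le th j Hth0). assert (0 <= Q0 * th ^ j) by (apply Rmult_le_pos; auto). nra. }
  assert (Hg : Rabs th < 1) by (rewrite Rabs_pos_eq; lra).
  exists (Q0 / (1 - th)). intros m. assert (ex_series (fun j => tt p a b m (S j))).
  { apply (@ex_series_le R_AbsRing R_CompleteNormedModule) with (fun j => Q0 * th ^ j).
    intros n. change (norm (tt p a b m (S n))) with (Rabs (tt p a b m (S n))). rewrite Rabs_pos_eq; apply Hb.
    apply ex_geom_scal; auto. }
  split; auto. rewrite <- Series_geom_scal by auto. apply Series_le. auto. apply ex_geom_scal; auto.
Qed.
End K.

Lemma const_one_unit : const_one = fun k => Cmult (RtoC 1) (unitC 0 k).
Proof. apply functional_extensionality; intros [|k]; unfold unitC; simpl; ring. Qed.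

Lemma liminf_from (u : nat -> R) : LimInf_seq u = Finite 0 -> forall eps, 0 < eps -> forall L, exists n, (L <= n)%nat /\ u n < eps.
Proof.
  intros H eps He L. assert (Hl : is_LimInf_seq u (LimInf_seq u)) by (unfold LimInf_seq; apply proj2_sig).
  rewrite H in Hl. destruct (Hl (mkposreal eps He)) as [H1 _]. destruct (H1 L) as [n [Hn Hu]].
  exists n; split; auto. simpl in Hu. lra.
Qed.

Theorem mainTheorem4 (p : R) (a b w : nat -> C) :
  1 < p ->
  (forall n, a n <> RtoC 0) -> (forall n, b n <> RtoC 0) ->
  (* limsup (|a_n| + |b_n|)^(1/n) < oo *)
  (exists C0 M : R, forall n, Cmod (a n) + Cmod (b n) <= C0 * M ^ n) ->
  (forall n, w n <> RtoC 0) ->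
  Fw_bounded p a b w ->
  (* (i) *)
  ((forall nu : nat,
      LimInf_seq (fun n => (Cmod (a (nu + n)%nat) + Cmod (b (nu + n - 1)%nat))
                           / prodR (fun k => Cmod (w (nu + k)%nat)) n) = Finite 0) ->
   adj_hypercyclic p a b w)
  /\
  (* (ii) *)
  (adj_hypercyclic p a b w -> inX p a b const_one ->
   forall M : R, exists n : nat,
     let t := fun j : nat =>
       rpowp (Cmod (prodC (fun k => Cdiv (b (n + k)%nat) (a (n + k + 1)%nat)) j)) p in
     ~ ex_series (fun j => t (S j)) \/
     M < prodR (fun k => Cmod (w k)) n / Cmod (a n)
           * rpowp (1 + Series (fun j => t (S j))) (/ p))
  /\
  (* (iii) *)
  adj_supercyclic p a b w
  /\
  (* (iv) *)
  ((exists M : R, forall n, Cmod (Cdiv (Cmult (w n) (a n)) (a (S n))) <= M) ->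
   Rbar_lt (LimSup_seq (fun n => Cmod (Cdiv (b n) (a (S n))))) (Finite 1) ->
   (adj_hypercyclic p a b w <->
    forall nu : nat,
      LimInf_seq (fun n => Cmod (Cdiv (a (nu + n)%nat)
                                       (prodC (fun k => w (nu + k)%nat) n))) = Finite 0)).
Proof.
  intros Hp Ha Hb _ Hw Hbd.
  destruct (bounded_const p a b w Hbd) as [Cb [HCb HF]].
  assert (HprodC : forall nu n, prodC (fun k => w (nu + k)%nat) n <> RtoC 0).
  { intros nu n E. assert (Cmod (prodC (fun k => w (nu + k)%nat) n) = 0) by (rewrite E; apply Cmod_0).
    rewrite Cmod_prodC in H. assert (0 < prodR (fun k => Cmod (w (nu + k)%nat)) n) by (apply prodR_gt0; intros; apply Cmod_gt_0; auto). lra. }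
  split; [|split; [|split]].
  -
    intros Hi. apply (hyper_of_Q p a b w Hp Ha Hw Cb HCb HF). intros eps He L.
    destruct (liminf_from _ (Hi 0%nat) eps He L) as [n [Hn Hu]]. exists n. split. exact Hn.
    unfold Qf, Bnd, Wp. exact Hu.
  -
    intros Hh H1 M.
    rewrite const_one_unit in H1.
    destruct (unbounded p a b w Hp Ha Cb HCb HF Hh _ 0%nat H1 ltac:(unfold unitC; simpl; intro E; injection E; lra) M 0%nat) as [n [_ Hn]].
    exists n. cbv zeta. right.
    destruct (iterB p a b w Cb HCb HF n _ H1) as [Hin _].
    rewrite iterF_scal, iter_unit in Hn, Hin.
    set (c := Cmult (RtoC 1) (prodC (fun k => w (0 + k)%nat) n)).
    assert (Ec : (fun i => Cmult (RtoC 1) (Cmult (prodC (fun k => w (0 + k)%nat) n) (unitC (0 + n) i))) = fun i => Cmult c (unitC n i)).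
    { apply functional_extensionality; intros i. unfold c. simpl. ring. }
    rewrite Ec in Hn, Hin.
    assert (Hc : c <> RtoC 0) by (unfold c; rewrite Cmult_1_l; apply (HprodC 0%nat)).
    destruct (lp_unit p a b Hp Ha c n Hc) as [Hiff Hnorm].
    assert (Hx := Hin). apply Hiff in Hx. rewrite Hnorm in Hn by auto.
    replace (prodR (fun k => Cmod (w k)) n / Cmod (a n)) with (Cmod (Cdiv c (a n))). exact Hn.
    rewrite Cmod_div by auto. unfold c. rewrite Cmult_1_l, Cmod_prodC. reflexivity.
  -
    apply (super_all p a b w Hp Ha Hw Cb HCb HF).
  -
    intros _ Hls.
    destruct (limsup_bound (rr a b) Hls) as [rho [N0 [Hrho HN]]].
    destruct (tt_unif p a b Hp rho N0 Hrho HN) as [U HU].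
    set (R0 := 1 + rsum (rr a b) N0).
    assert (HR : forall n, rr a b n <= R0) by (apply (rr_bound a b rho N0 Hrho HN)).
    split.
    + intros Hh nu. apply is_LimInf_seq_unique. simpl. intros eps. split.
      * intros L. set (x := fun k => Cmult (RtoC 1) (unitC nu k)).
        assert (Hx1 : RtoC 1 <> RtoC 0) by (intro E; injection E; lra).
        destruct (lp_unit p a b Hp Ha (RtoC 1) nu Hx1) as [Hiff _].
        assert (Hx : inX p a b x) by (apply Hiff; apply HU).
        assert (HU0 : 0 <= U) by (destruct (HU 0%nat) as [E1 E2]; eapply Rle_trans; [|apply E2]; apply Series_ge0; auto; intros; apply rpowp_ge0).
        set (V := rpowp (1 + U) (/ p)).
        assert (HV : 0 < V) by (apply rpowp_gt0; lra).
        destruct (unbounded p a b w Hp Ha Cb HCb HF Hh x nu Hx ltac:(unfold x, unitC; rewrite Nat.eqb_refl; intro E; injection E; lra) (V / eps) L) as [n [Hn HK]].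
        exists n. split; auto.
        unfold x in HK. rewrite iterF_scal, iter_unit in HK.
        set (c := Cmult (RtoC 1) (prodC (fun k => w (nu + k)%nat) n)).
        assert (Ec : (fun i => Cmult (RtoC 1) (Cmult (prodC (fun k => w (nu + k)%nat) n) (unitC (nu + n) i))) = fun i => Cmult c (unitC (nu + n) i)).
        { apply functional_extensionality; intros i. unfold c. ring. }
        rewrite Ec in HK.
        assert (Hc : c <> RtoC 0) by (unfold c; rewrite Cmult_1_l; apply HprodC).
        destruct (lp_unit p a b Hp Ha c (nu + n) Hc) as [_ Hnorm].
        destruct (HU (nu + n)%nat) as [HUe HUl].
        rewrite Hnorm in HK by auto.
        assert (rpowp (1 + Series (fun j => tt p a b (nu + n) (S j))) (/ p) <= V).
        { apply rpowp_le. left; apply Rinv_0_lt_compat; lra. split; [|lra].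
          assert (0 <= Series (fun j => tt p a b (nu + n) (S j))) by (apply Series_ge0; auto; intros; apply rpowp_ge0). lra. }
        assert (Hca : Cmod (Cdiv c (a (nu + n)%nat)) = Cmod (prodC (fun k => w (nu + k)%nat) n) / Cmod (a (nu + n)%nat)).
        { rewrite Cmod_div by auto. unfold c; rewrite Cmult_1_l; auto. }
        assert (HP0 : 0 < Cmod (prodC (fun k => w (nu + k)%nat) n)) by (apply Cmod_gt_0; auto).
        assert (HA0 : 0 < Cmod (a (nu + n)%nat)) by (apply Cmod_gt_0; auto).
        rewrite Cmod_div by auto. rewrite Hca in HK.
        assert (V / eps < Cmod (prodC (fun k => w (nu + k)%nat) n) / Cmod (a (nu + n)%nat) * V).
        { eapply Rlt_le_trans. apply HK. apply Rmult_le_compat_l; auto. apply Rlt_le, Rdiv_lt_0_compat; auto. }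
        assert (1 / eps < Cmod (prodC (fun k => w (nu + k)%nat) n) / Cmod (a (nu + n)%nat)).
        { apply Rmult_lt_reg_r with V; auto. unfold Rdiv in *. nra. }
        simpl. pose proof (cond_pos eps). 
        apply Rmult_lt_reg_r with (Cmod (prodC (fun k => w (nu + k)%nat) n) / Cmod (a (nu + n)%nat)).
        apply Rdiv_lt_0_compat; auto.
        replace (Cmod (a (nu + n)%nat) / Cmod (prodC (fun k => w (nu + k)%nat) n) * (Cmod (prodC (fun k => w (nu + k)%nat) n) / Cmod (a (nu + n)%nat))) with 1 by (field; lra).
        replace (0 + eps) with (pos eps) by ring.
        apply Rmult_lt_compat_l with (r := pos eps) in H1; auto.
        replace (eps * (1 / eps)) with 1 in H1 by (field; lra). lra.
      * exists O. intros n _. simpl. pose proof (cond_pos eps). pose proof (Cmod_ge_0 (Cdiv (a (nu + n)%nat) (prodC (fun k => w (nu + k)%nat) n))). lra.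
    + intros Hl. apply (hyper_of_Q p a b w Hp Ha Hw Cb HCb HF). intros eps He L.
      assert (HR0 : 0 < 1 + R0) by (pose proof (HR 0%nat); pose proof (Cmod_ge_0 (Cdiv (b 0%nat) (a 1%nat))); unfold rr in *; lra).
      destruct (liminf_from _ (Hl 0%nat) (eps / (1 + R0)) ltac:(apply Rdiv_lt_0_compat; lra) (S L)) as [n [Hn Hu]].
      exists n. split. lia.
      simpl in Hu. destruct n as [|n']. lia.
      unfold Qf, Bnd, Wp. simpl (S n' - 1)%nat. rewrite Nat.sub_0_r.
      rewrite Cmod_div in Hu by apply (HprodC 0%nat). rewrite Cmod_prodC in Hu. simpl in Hu.
      set (W := prodR (fun k => Cmod (w k)) (S n')) in *.
      assert (HW : 0 < W) by (apply prodR_gt0; intros; apply Cmod_gt_0; auto).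
      pose proof (HR n'). unfold rr in H. rewrite Cmod_div in H by auto.
      assert (HA0 : 0 < Cmod (a (S n'))) by (apply Cmod_gt_0; auto).
      assert (Cmod (b n') <= R0 * Cmod (a (S n'))).
      { apply Rmult_le_compat_r with (r := Cmod (a (S n'))) in H. unfold Rdiv in H. rewrite Rmult_assoc, Rinv_l, Rmult_1_r in H by lra. auto. lra. }
      apply Rle_lt_trans with ((1 + R0) * (Cmod (a (S n')) / W)).
      unfold Rdiv. rewrite <- Rmult_assoc. apply Rmult_le_compat_r. left; apply Rinv_0_lt_compat; auto. lra.
      apply Rmult_lt_compat_l with (r := 1 + R0) in Hu; auto. replace ((1 + R0) * (eps / (1 + R0))) with eps in Hu by (field; lra). auto.
Qed.
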